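(* Let $\delta>0$ and $0<c\le2\sqrt\delta$, and set $\tilde\lambda:=1-\frac{c^2}{4\delta}\ge0$. Then $\tilde\lambda$ is an eigenvalue in the extended sense: the Riccati solution $\eta^u(z;\tilde\lambda)$ tending to $\mu^u_-(\tilde\lambda)$ as $z\to-\infty$ tends, as $z\to+\infty$, to the double root $\mu^s_+(\tilde\lambda)=\mu^u_+(\tilde\lambda)=-\frac{c}{2\delta}$. In particular, for $0<c<2\sqrt\delta$ the linearised operator about the travelling wave has the positive real eigenvalue $\tilde\lambda$.
   Context: $\hat u$ solves $\delta\hat u''+c\hat u'+\hat u(1-\hat u)=0$ with $\hat u(-\infty)=1$, $\hat u(+\infty)=0$. Riccati equation: $\eta'=\frac{\lambda-1+2\hat u(z)}{\delta}-\frac c\delta\eta-\eta^2$ on $\mathbb CP^1$ (equation for $\eta=q/p$ along solutions of $p'=q$, $q'=\frac{\lambda-1+2\hat u}{\delta}p-\frac c\delta q$). $\mu^{u}_-(\lambda)=\frac{-c+\sqrt{c^2+4\delta(\lambda+1)}}{2\delta}$, $\mu^{u,s}_+(\lambda)=\frac{-c\pm\sqrt{c^2+4\delta(\lambda-1)}}{2\delta}$. For $\mathrm{Re}\,\lambda\ge0$, $\lambda$ is an eigenvalue in the extended sense if some solution of the Riccati equation tends to $\mu^u_-(\lambda)$ as $z\to-\infty$ and to $\mu^s_+(\lambda)$ as $z\to+\infty$. *)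

(* Defs.v *)
From Stdlib Require Import Reals Lra.
Open Scope R_scope.

Definition lim_pinf (f : R -> R) (l : R) : Prop :=
  forall eps, eps > 0 -> exists M, forall z, z > M -> Rabs (f z - l) < eps.
Definition lim_minf (f : R -> R) (l : R) : Prop :=
  forall eps, eps > 0 -> exists M, forall z, z < M -> Rabs (f z - l) < eps.

Definition travelling_wave (delta c : R) (u : R -> R) : Prop :=
  exists du ddu : R -> R,
    (forall z, derivable_pt_lim u z (du z)) /\
    (forall z, derivable_pt_lim du z (ddu z)) /\
    (forall z, delta * ddu z + c * du z + u z * (1 - u z) = 0) /\
    lim_minf u 1 /\ lim_pinf u 0.

Definition mu_u_minus (delta c lam : R) : R :=
  (- c + sqrt (c ^ 2 + 4 * delta * (lam + 1))) / (2 * delta).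
Definition mu_u_plus (delta c lam : R) : R :=
  (- c + sqrt (c ^ 2 + 4 * delta * (lam - 1))) / (2 * delta).
Definition mu_s_plus (delta c lam : R) : R :=
  (- c - sqrt (c ^ 2 + 4 * delta * (lam - 1))) / (2 * delta).

(* Its projectivisation eta = q/p is a solution of the Riccati equation
   on CP^1 (here RP^1, since lam is real); every Riccati solution arises so. *)
Definition lin_solution (delta c lam : R) (u p q : R -> R) : Prop :=
  (forall z, derivable_pt_lim p z (q z)) /\
  (forall z, derivable_pt_lim q z ((lam - 1 + 2 * u z) / delta * p z - c / delta * q z)) /\
  (exists z0, ~ (p z0 = 0 /\ q z0 = 0)).

(* eta = q/p tends to l in P^1 as z -> +oo / -oo: eventually p <> 0 and q/p -> l. *)
Definition ratio_tends_pinf (p q : R -> R) (l : R) : Prop :=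
  (exists M, forall z, z > M -> p z <> 0) /\ lim_pinf (fun z => q z / p z) l.
Definition ratio_tends_minf (p q : R -> R) (l : R) : Prop :=
  (exists M, forall z, z < M -> p z <> 0) /\ lim_minf (fun z => q z / p z) l.

Definition extended_eigenvalue (delta c : R) (u : R -> R) (lam : R) : Prop :=
  exists p q, lin_solution delta c lam u p q /\
    ratio_tends_minf p q (mu_u_minus delta c lam) /\
    ratio_tends_pinf p q (mu_s_plus delta c lam).

(* Main.v *)
Require Import Defs.
From Stdlib Require Import Reals Lra Psatz ZArith.
From Coquelicot Require Import Coquelicot.
Import Factorial.
Open Scope R_scope.

Lemma antider (f : R -> R) (x : R) :
  (forall t, continuity_pt f t) ->
  derivable_pt_lim (fun z => RInt f 0 z) x (f x).
Proof.
  intros Hf.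
  apply is_derive_Reals.
  apply (is_derive_RInt f (fun z => RInt f 0 z) 0 x).
  - apply filter_forall. intros b0. apply (@RInt_correct R_CompleteNormedModule).
    apply ex_RInt_continuous. intros z _. apply continuity_pt_filterlim. apply Hf.
  - apply continuity_pt_filterlim. apply Hf.
Qed.

Lemma RInt0 (f : R -> R) : RInt f 0 0 = 0.
Proof. exact (@RInt_point R_CompleteNormedModule 0 f). Qed.

Lemma mono_le (f f' : R -> R) (a b : R) :
  (forall t, derivable_pt_lim f t (f' t)) -> a <= b ->
  (forall t, a < t < b -> 0 <= f' t) -> f a <= f b.
Proof.
  intros Hd Hab Hp. destruct (Req_dec a b) as [->|Hne]; [lra|].
  destruct (MVT_cor2 f f' a b) as [c [Hc1 Hc2]]; [lra| intros; apply Hd |].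
  assert (0 <= f' c * (b - a)) by (apply Rmult_le_pos; [apply Hp; lra| lra]). lra.
Qed.

Lemma mono_ge (f f' : R -> R) (a b : R) :
  (forall t, derivable_pt_lim f t (f' t)) -> a <= b ->
  (forall t, a < t < b -> f' t <= 0) -> f b <= f a.
Proof.
  intros Hd Hab Hp.
  assert (- f a <= - f b); [|lra].
  apply (mono_le (fun t => - f t) (fun t => - f' t)); auto.
  - intro t. apply derivable_pt_lim_opp. apply Hd.
  - intros t Ht. specialize (Hp t Ht). lra.
Qed.

Lemma dlim_ext (f : R -> R) x l l' : derivable_pt_lim f x l -> l = l' -> derivable_pt_lim f x l'.
Proof. intros H ->; exact H. Qed.

Lemma dlim_fext (f g : R -> R) x l : (forall t, f t = g t) -> derivable_pt_lim f x l -> derivable_pt_lim g x l.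
Proof.
  intros He H. intros eps Heps. destruct (H eps Heps) as [d Hd]. exists d.
  intros h H0 H1. rewrite <- !He. apply Hd; auto.
Qed.

Lemma cont_of_dlim (f : R -> R) x l : derivable_pt_lim f x l -> continuity_pt f x.
Proof. intros H. apply derivable_continuous_pt. exists l. exact H. Qed.

Lemma d_mexp (f : R -> R) fx' r x :
  derivable_pt_lim f x fx' ->
  derivable_pt_lim (fun t => f t * exp (r * t)) x ((fx' + r * f x) * exp (r * x)).
Proof.
  intros H.
  assert (He : derivable_pt_lim (fun t => exp (r * t)) x (r * exp (r * x))).
  { apply (dlim_ext _ _ (exp (r*x) * (r * 1))).
    - apply (derivable_pt_lim_comp (fun t => r * t) exp).
      + apply derivable_pt_lim_scal. apply derivable_pt_lim_id.
      + apply derivable_pt_lim_exp.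
    - ring. }
  apply (dlim_ext _ _ (fx' * exp (r*x) + f x * (r * exp (r*x)))).
  - apply (derivable_pt_lim_mult f (fun t => exp (r*t))); auto.
  - ring.
Qed.

Lemma d_lin (f g : R -> R) f' g' a b x :
  derivable_pt_lim f x f' -> derivable_pt_lim g x g' ->
  derivable_pt_lim (fun t => a * f t + b * g t) x (a * f' + b * g').
Proof.
  intros Hf Hg.
  apply (derivable_pt_lim_plus (fun t => a * f t) (fun t => b * g t));
   apply derivable_pt_lim_scal; auto.
Qed.

Lemma cont_induction (f : R -> R) (a b : R) :
  a <= b -> (forall t, continuity_pt f t) ->
  (forall z, a <= z <= b -> (forall t, a <= t < z -> 0 < f t) -> 0 < f z) ->
  forall z, a <= z <= b -> 0 < f z.
Proof.
  intros Hab Hc Hind.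
  set (E := fun x => a <= x <= b /\ forall t, a <= t <= x -> 0 < f t).
  assert (HEa : E a).
  { split; [lra|]. intros t Ht. replace t with a by lra. apply Hind; [lra|]. intros; lra. }
  assert (Hb : bound E). { exists b. intros x [Hx _]. lra. }
  destruct (completeness E Hb (ex_intro _ a HEa)) as [m [Hub Hlub]].
  assert (Ham : a <= m) by (apply Hub; exact HEa).
  assert (Hmb : m <= b) by (apply Hlub; intros x [Hx _]; lra).
  assert (Hbelow : forall t, a <= t < m -> 0 < f t).
  { intros t Ht.
    destruct (Classical_Prop.classic (exists x, E x /\ t < x)) as [[x [[Hx1 Hx2] Hx3]]|Hn].
    - apply Hx2. lra.
    - exfalso. assert (m <= t); [|lra]. apply Hlub. intros x Hx.
      destruct (Rle_or_lt x t); auto. exfalso; apply Hn; exists x; auto. }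
  assert (Hm : 0 < f m) by (apply Hind; auto).
  assert (Hmb' : m = b).
  { destruct (Req_dec m b) as [|Hne]; auto. exfalso.
    destruct (Hc m (f m / 2)) as [d [Hd Hd2]]; [lra|].
    set (x := Rmin b (m + d/2)).
    assert (Hx : E x).
    { split. { unfold x. split; [apply Rmin_glb; lra| apply Rmin_l]. }
      intros t Ht. destruct (Rlt_or_le t m) as [Htm|Htm]. { apply Hbelow; lra. }
      destruct (Req_dec t m) as [->|Htm']; auto.
      assert (Hx2 : x <= m + d/2) by apply Rmin_r.
      assert (Hdist : Rabs (f t - f m) < f m / 2).
      { apply (Hd2 t). split. { split; [exact I| congruence]. }
        simpl. unfold Rdist. rewrite Rabs_right; lra. }
      apply Rabs_def2 in Hdist. lra. }
    assert (x <= m) by (apply Hub; exact Hx).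
    unfold x in H. unfold Rmin in H. destruct (Rle_dec b (m + d/2)); lra. }
  subst m. intros z Hz. destruct (Req_dec z b) as [->|]; auto. apply Hbelow; lra.
Qed.

Lemma cont_intro (f : R -> R) x :
  (forall eps, 0 < eps -> exists d, 0 < d /\ forall t, Rabs (t - x) < d -> Rabs (f t - f x) < eps) ->
  continuity_pt f x.
Proof.
  intros H eps Heps. destruct (H eps Heps) as [d [Hd Hd2]]. exists d. split; [lra|].
  intros t [_ Ht]. simpl in *. unfold Rdist in *. apply Hd2; auto.
Qed.

Lemma cont_elim (f : R -> R) x : continuity_pt f x ->
  forall eps, 0 < eps -> exists d, 0 < d /\ forall t, Rabs (t - x) < d -> Rabs (f t - f x) < eps.
Proof.
  intros H eps Heps. destruct (H eps Heps) as [d [Hd Hd2]]. exists d. split; [lra|].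
  intros t Ht. destruct (Req_dec t x) as [->|Hne].
  - unfold Rminus. rewrite Rplus_opp_r, Rabs_R0. lra.
  - apply (Hd2 t). split; [split; [exact I| congruence]| exact Ht].
Qed.

Lemma cv_elim (u : nat -> R) l : Un_cv u l -> forall eps, 0 < eps -> exists N, forall n, (N <= n)%nat -> Rabs (u n - l) < eps.
Proof. intros H eps Heps. destruct (H eps Heps) as [N HN]. exists N. intros n Hn. apply HN; lia. Qed.

Lemma lim_le_tau (a tau : nat -> R) A B e :
  Un_cv a A -> Un_cv tau 0 -> (forall n, Rabs (a n - B) <= tau n + e) -> Rabs (A - B) <= e.
Proof.
  intros Ha Ht Hb. destruct (Rle_or_lt (Rabs (A - B)) e) as [|Hlt]; auto. exfalso.
  set (g := Rabs (A - B) - e).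
  destruct (cv_elim _ _ Ha (g/2)) as [N1 HN1]; [unfold g; lra|].
  destruct (cv_elim _ _ Ht (g/2)) as [N2 HN2]; [unfold g; lra|].
  specialize (HN1 (N1+N2)%nat ltac:(lia)). specialize (HN2 (N1+N2)%nat ltac:(lia)).
  specialize (Hb (N1+N2)%nat).
  rewrite Rminus_0_r in HN2.
  assert (Rabs (A - B) <= Rabs (a (N1+N2)%nat - A) + Rabs (a (N1+N2)%nat - B)).
  { replace (A - B) with (-(a (N1+N2)%nat - A) + (a (N1+N2)%nat - B)) by ring.
    eapply Rle_trans; [apply Rabs_triang|]. rewrite Rabs_Ropp. lra. }
  pose proof (Rle_abs (tau (N1+N2)%nat)). unfold g in *. lra.
Qed.

Lemma lim_ge (u : nat -> R) l m N : Un_cv u l -> (forall n, (N <= n)%nat -> m <= u n) -> m <= l.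
Proof.
  intros H Hm. destruct (Rle_or_lt m l) as [|Hlt]; auto. exfalso.
  destruct (cv_elim _ _ H (m - l)) as [N1 HN1]; [lra|].
  specialize (HN1 (N+N1)%nat ltac:(lia)). specialize (Hm (N+N1)%nat ltac:(lia)).
  apply Rabs_def2 in HN1. lra.
Qed.

Lemma lim_le (u : nat -> R) l m N : Un_cv u l -> (forall n, (N <= n)%nat -> u n <= m) -> l <= m.
Proof.
  intros H Hm. assert (- m <= - l); [|lra].
  apply (lim_ge (fun n => - u n) (- l) (-m) N).
  - apply CV_opp. exact H.
  - intros n Hn. specialize (Hm n Hn). lra.
Qed.

Lemma mvt_any (f f' : R -> R) u w : u <> w -> (forall t, derivable_pt_lim f t (f' t)) ->
  exists c, f w - f u = f' c * (w - u) /\ Rabs (c - u) < Rabs (w - u).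
Proof.
  intros Hne Hd. destruct (Rlt_or_le u w) as [Hlt|Hle].
  - destruct (MVT_cor2 f f' u w Hlt) as [c [Hc1 Hc2]]; [intros; apply Hd|].
    exists c. split; auto. rewrite !Rabs_right; lra.
  - destruct (MVT_cor2 f f' w u) as [c [Hc1 Hc2]]; [lra|intros; apply Hd|].
    exists c. split; [lra|]. rewrite !Rabs_left1; lra.
Qed.

Lemma deriv_lim (fn gn : nat -> R -> R) (f g : R -> R) (tau : nat -> R) (x L : R) :
  Rabs x < L -> (forall n t, derivable_pt_lim (fn n) t (gn n t)) ->
  (forall t, Un_cv (fun n => fn n t) (f t)) -> Un_cv tau 0 ->
  (forall n t, Rabs t <= L -> Rabs (gn n t - g t) <= tau n) ->
  continuity_pt g x -> derivable_pt_lim f x (g x).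
Proof.
  intros HxL Hd Hcv Htau Hu Hg eps Heps.
  destruct (cont_elim g x Hg (eps/2)) as [d1 [Hd1 Hd1']]; [lra|].
  assert (Hdp : 0 < Rmin d1 (L - Rabs x)) by (apply Rmin_glb_lt; lra).
  exists (mkposreal _ Hdp). intros h Hh0 Hh. simpl in Hh.
  assert (Hh1 : Rabs h < d1) by (eapply Rlt_le_trans; [exact Hh| apply Rmin_l]).
  assert (Hh2 : Rabs h < L - Rabs x) by (eapply Rlt_le_trans; [exact Hh| apply Rmin_r]).
  assert (Hle : Rabs ((f (x + h) - f x) / h - g x) <= eps / 2).
  { apply (lim_le_tau (fun n => (fn n (x + h) - fn n x) / h) tau); auto.
    - apply CV_mult.
      + apply CV_minus; [apply Hcv| apply Hcv].
      + intros e He. exists O. intros. unfold Rdist. rewrite Rminus_eq_0, Rabs_R0. lra.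
    - intros n. destruct (mvt_any (fn n) (gn n) x (x + h)) as [c [Hc1 Hc2]]; [lra| apply Hd|].
      replace (x + h - x) with h in * by ring.
      rewrite Hc1. replace (gn n c * h / h) with (gn n c) by (field; auto).
      assert (Hcx : Rabs (c - x) < d1) by lra.
      assert (HcL : Rabs c <= L).
      { replace c with ((c - x) + x) by ring. eapply Rle_trans; [apply Rabs_triang|]. lra. }
      specialize (Hu n c HcL). specialize (Hd1' c Hcx).
      replace (gn n c - g x) with ((gn n c - g c) + (g c - g x)) by ring.
      eapply Rle_trans; [apply Rabs_triang|]. lra. }
  lra.
Qed.

Lemma unif_cont (fn : nat -> R -> R) (f : R -> R) (tau : nat -> R) (x L : R) :
  Rabs x < L -> (forall n t, continuity_pt (fn n) t) -> Un_cv tau 0 ->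
  (forall n t, Rabs t <= L -> Rabs (fn n t - f t) <= tau n) -> continuity_pt f x.
Proof.
  intros HxL Hc Htau Hu. apply cont_intro. intros eps Heps.
  destruct (cv_elim _ _ Htau (eps/3)) as [N HN]; [lra|]. specialize (HN N (le_n N)).
  rewrite Rminus_0_r in HN. pose proof (Rle_abs (tau N)).
  destruct (cont_elim _ _ (Hc N x) (eps/3)) as [d1 [Hd1 Hd1']]; [lra|].
  exists (Rmin d1 (L - Rabs x)). split; [apply Rmin_glb_lt; lra|].
  intros t Ht.
  assert (Ht1 : Rabs (t - x) < d1) by (eapply Rlt_le_trans; [exact Ht| apply Rmin_l]).
  assert (Ht2 : Rabs (t - x) < L - Rabs x) by (eapply Rlt_le_trans; [exact Ht| apply Rmin_r]).
  assert (HtL : Rabs t <= L).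
  { replace t with ((t - x) + x) by ring. eapply Rle_trans; [apply Rabs_triang|]. lra. }
  pose proof (Hu N t HtL). pose proof (Hu N x ltac:(lra)). specialize (Hd1' t Ht1).
  assert (Habs : forall p q r : R, Rabs (p + q + r) <= Rabs p + Rabs q + Rabs r).
  { intros p q r. eapply Rle_trans; [apply Rabs_triang|].
    pose proof (Rabs_triang p q). lra. }
  replace (f t - f x) with (-(fn N t - f t) + (fn N t - fn N x) + (fn N x - f x)) by ring.
  eapply Rle_lt_trans; [apply Habs|]. rewrite Rabs_Ropp. lra.
Qed.

Lemma cv_of_tail (u : nat -> R) (tau : nat -> R) :
  Un_cv tau 0 -> (forall m n, (n <= m)%nat -> Rabs (u m - u n) <= tau n) ->
  exists l, Un_cv u l /\ forall n, Rabs (l - u n) <= tau n.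
Proof.
  intros Ht Hb.
  assert (Hc : Cauchy_crit u).
  { intros eps Heps. destruct (cv_elim _ _ Ht (eps/2)) as [N HN]; [lra|].
    exists N. intros n m Hn Hm. unfold Rdist.
    specialize (HN N (le_n N)). rewrite Rminus_0_r in HN. pose proof (Rle_abs (tau N)).
    pose proof (Hb n N Hn). pose proof (Hb m N Hm).
    replace (u n - u m) with ((u n - u N) - (u m - u N)) by ring.
    eapply Rle_lt_trans; [apply Rabs_triang|]. rewrite Rabs_Ropp. lra. }
  destruct (Rcomplete.R_complete u Hc) as [l Hl]. exists l. split; auto.
  intros n.
  apply (lim_le_tau (fun m => u (m + n)%nat) (fun _ => 0)).
  - intros e He. destruct (Hl e He) as [N HN]. exists N. intros m Hm. apply HN. lia.
  - intros e He. exists O. intros. unfold Rdist. rewrite Rminus_eq_0, Rabs_R0. lra.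
  - intros m. rewrite Rplus_0_l. apply Hb. lia.
Qed.

Lemma fact_S_INR n : INR (fact (S n)) = INR (S n) * INR (fact n).
Proof. rewrite fact_simpl, mult_INR. reflexivity. Qed.

Lemma int_bound (d d' : R -> R) (M L : R) (n : nat) :
  (forall t, derivable_pt_lim d t (d' t)) -> d 0 = 0 ->
  (forall t, Rabs t <= L -> Rabs (d' t) <= M * Rabs t ^ n / INR (fact n)) ->
  forall x, Rabs x <= L -> Rabs (d x) <= M * Rabs x ^ (S n) / INR (fact (S n)).
Proof.
  intros Hd H0 Hb x Hx.
  assert (Hf : 0 < INR (fact n)) by (apply lt_0_INR; apply lt_O_fact).
  assert (HSn : 0 < INR (S n)) by (apply lt_0_INR; lia).
  destruct (Rle_or_lt 0 x) as [Hx0|Hx0].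
  - set (G := fun t => M * t ^ (S n) / INR (fact (S n))).
    assert (HG : forall t, derivable_pt_lim G t (M * t ^ n / INR (fact n))).
    { intros t. unfold G. apply (dlim_ext _ _ (M * (INR (S n) * t ^ Init.Nat.pred (S n)) / INR (fact (S n)))).
      - apply (derivable_pt_lim_div_scal (fun t => M * t ^ S n)).
        apply derivable_pt_lim_scal. apply derivable_pt_lim_pow.
      - simpl Init.Nat.pred. rewrite fact_S_INR. field. lra. }
    assert (Hl1 : G 0 - d 0 <= G x - d x).
    { apply (mono_le (fun t => G t - d t) (fun t => M * t ^ n / INR (fact n) - d' t)); auto.
      - intros t. apply derivable_pt_lim_minus; auto.
      - intros t Ht. assert (Rabs t <= L) by (pose proof (Rle_abs x); apply Rabs_le; lra).
        specialize (Hb t H). rewrite (Rabs_right t) in Hb by lra. pose proof (Rle_abs (d' t)); pose proof (Rle_abs (-(d' t))); rewrite Rabs_Ropp in *. lra. }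
    assert (Hl2 : G 0 + d 0 <= G x + d x).
    { apply (mono_le (fun t => G t + d t) (fun t => M * t ^ n / INR (fact n) + d' t)); auto.
      - intros t. apply derivable_pt_lim_plus; auto.
      - intros t Ht. assert (Rabs t <= L) by (pose proof (Rle_abs x); apply Rabs_le; lra).
        specialize (Hb t H). rewrite (Rabs_right t) in Hb by lra. pose proof (Rle_abs (d' t)); pose proof (Rle_abs (-(d' t))); rewrite Rabs_Ropp in *. lra. }
    assert (HG0 : G 0 = 0) by (unfold G; rewrite ?Ropp_0, pow_i by lia; unfold Rdiv; ring).
    rewrite (Rabs_right x) by lra. fold (G x). apply Rabs_le. lra.
  - set (G := fun t => M * (- t) ^ (S n) / INR (fact (S n))).
    assert (HG : forall t, derivable_pt_lim G t (- (M * (- t) ^ n / INR (fact n)))).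
    { intros t. unfold G. apply (dlim_ext _ _ (M * ((INR (S n) * (-t) ^ Init.Nat.pred (S n)) * (-1)) / INR (fact (S n)))).
      - apply (derivable_pt_lim_div_scal (fun t => M * (-t) ^ S n)).
        apply derivable_pt_lim_scal.
        apply (derivable_pt_lim_comp (fun t => - t) (fun u => u ^ S n)).
        + apply (dlim_ext _ _ (- 1)). apply derivable_pt_lim_opp. apply derivable_pt_lim_id. ring.
        + apply derivable_pt_lim_pow.
      - simpl Init.Nat.pred. rewrite fact_S_INR. field. lra. }
    assert (Hl1 : G 0 - d 0 <= G x - d x).
    { apply (mono_ge (fun t => G t - d t) (fun t => - (M * (-t) ^ n / INR (fact n)) - d' t)); [|lra|].
      - intros t. apply derivable_pt_lim_minus; auto.
      - intros t Ht. assert (Rabs t <= L) by (pose proof (Rle_abs (-x)); rewrite Rabs_Ropp in *; apply Rabs_le; lra).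
        specialize (Hb t H). rewrite (Rabs_left t) in Hb by lra. pose proof (Rle_abs (d' t)); pose proof (Rle_abs (-(d' t))); rewrite Rabs_Ropp in *. lra. }
    assert (Hl2 : G 0 + d 0 <= G x + d x).
    { apply (mono_ge (fun t => G t + d t) (fun t => - (M * (-t) ^ n / INR (fact n)) + d' t)); [|lra|].
      - intros t. apply derivable_pt_lim_plus; auto.
      - intros t Ht. assert (Rabs t <= L) by (pose proof (Rle_abs (-x)); rewrite Rabs_Ropp in *; apply Rabs_le; lra).
        specialize (Hb t H). rewrite (Rabs_left t) in Hb by lra. pose proof (Rle_abs (d' t)); pose proof (Rle_abs (-(d' t))); rewrite Rabs_Ropp in *. lra. }
    assert (HG0 : G 0 = 0) by (unfold G; rewrite ?Ropp_0, pow_i by lia; unfold Rdiv; ring).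
    rewrite (Rabs_left x) by lra. fold (G x). apply Rabs_le. lra.
Qed.

Lemma cont_bound (k : R -> R) L : (forall t, continuity_pt k t) ->
  exists K, 0 <= K /\ forall t, Rabs t <= L -> Rabs (k t) <= K.
Proof.
  intros Hk. destruct (Rle_or_lt 0 L) as [HL|HL].
  - destruct (continuity_ab_maj (fun t => Rabs (k t)) (-L) L) as [m [Hm1 Hm2]]; [lra| |].
    + intros c _. apply (continuity_pt_comp k Rabs); auto. apply Rcontinuity_abs.
    + exists (Rabs (k m)). split; [apply Rabs_pos|]. intros t Ht. apply Hm1.
      pose proof (Rle_abs t); pose proof (Rle_abs (-t)); rewrite Rabs_Ropp in *; lra.
  - exists 0. split; [lra|]. intros t Ht. pose proof (Rabs_pos t). lra.
Qed.

Fixpoint pic (k : R -> R) (a b : R) (n : nat) : (R -> R) * (R -> R) :=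
  match n with
  | O => (fun _ => a, fun _ => b)
  | S n => (fun x => a + RInt (snd (pic k a b n)) 0 x,
            fun x => b + RInt (fun t => k t * fst (pic k a b n) t) 0 x)
  end.

Lemma pic_prop (k : R -> R) a b : (forall t, continuity_pt k t) -> forall n,
  (forall x, continuity_pt (fst (pic k a b n)) x /\ continuity_pt (snd (pic k a b n)) x) /\
  (forall x, derivable_pt_lim (fst (pic k a b (S n))) x (snd (pic k a b n) x) /\
             derivable_pt_lim (snd (pic k a b (S n))) x (k x * fst (pic k a b n) x)) /\
  fst (pic k a b n) 0 = a /\ snd (pic k a b n) 0 = b.
Proof.
  intros Hk.
  assert (Hder : forall n, (forall x, continuity_pt (fst (pic k a b n)) x /\ continuity_pt (snd (pic k a b n)) x) ->
    (forall x, derivable_pt_lim (fst (pic k a b (S n))) x (snd (pic k a b n) x) /\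
             derivable_pt_lim (snd (pic k a b (S n))) x (k x * fst (pic k a b n) x))).
  { intros n Hc x. simpl. split.
    - apply (dlim_ext _ _ (0 + snd (pic k a b n) x)); [|ring].
      apply (derivable_pt_lim_plus (fun _ => a) (fun x => RInt (snd (pic k a b n)) 0 x)).
      + apply derivable_pt_lim_const.
      + apply antider. intros t. apply Hc.
    - apply (dlim_ext _ _ (0 + k x * fst (pic k a b n) x)); [|ring].
      apply (derivable_pt_lim_plus (fun _ => b) (fun x => RInt (fun t => k t * fst (pic k a b n) t) 0 x)).
      + apply derivable_pt_lim_const.
      + apply (antider (fun t => k t * fst (pic k a b n) t)). intros t.
        apply continuity_pt_mult; auto. apply Hc. }
  induction n as [|n IH].
  - assert (Hc0 : forall x, continuity_pt (fst (pic k a b 0)) x /\ continuity_pt (snd (pic k a b 0)) x).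
    { intros x. simpl. split; apply continuity_pt_const; intros u v; reflexivity. }
    split; [exact Hc0|]. split; [apply Hder; exact Hc0|]. simpl. auto.
  - destruct IH as [Hc [Hd [H0 H1]]].
    assert (Hc1 : forall x, continuity_pt (fst (pic k a b (S n))) x /\ continuity_pt (snd (pic k a b (S n))) x).
    { intros x. split; eapply cont_of_dlim; apply Hd. }
    split; [exact Hc1|]. split; [apply Hder; exact Hc1|].
    simpl. rewrite !RInt0. split; ring.
Qed.

Lemma pic_bound (k : R -> R) a b L K : (forall t, continuity_pt k t) -> 0 <= L -> 0 <= K ->
  (forall t, Rabs t <= L -> Rabs (k t) <= K) ->
  forall n x, Rabs x <= L ->
    Rabs (fst (pic k a b (S n)) x - fst (pic k a b n) x) <= Rmax (Rabs b) (K * Rabs a) * Rmax 1 K ^ n * Rabs x ^ (S n) / INR (fact (S n)) /\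
    Rabs (snd (pic k a b (S n)) x - snd (pic k a b n) x) <= Rmax (Rabs b) (K * Rabs a) * Rmax 1 K ^ n * Rabs x ^ (S n) / INR (fact (S n)).
Proof.
  intros Hk HL HK HkK.
  set (C := Rmax (Rabs b) (K * Rabs a)). set (K1 := Rmax 1 K).
  assert (HC1 : Rabs b <= C) by apply Rmax_l. assert (HC2 : K * Rabs a <= C) by apply Rmax_r.
  assert (HK1 : 1 <= K1) by apply Rmax_l. assert (HK2 : K <= K1) by apply Rmax_r.
  assert (HC0 : 0 <= C) by (pose proof (Rabs_pos b); lra).
  pose proof (pic_prop k a b Hk) as HP.
  induction n as [|n IH].
  - intros x Hx. destruct (HP 0%nat) as [_ [Hd0 [H0a H0b]]]. destruct (HP 1%nat) as [_ [_ [H1a H1b]]].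
    replace (C * K1 ^ 0) with C by (simpl; ring).
    split.
    + apply (int_bound (fun t => fst (pic k a b 1) t - fst (pic k a b 0) t) (fun t => b - 0) C L 0); auto.
      * intros t. apply derivable_pt_lim_minus; [apply Hd0|]. simpl. apply derivable_pt_lim_const.
      * rewrite H1a, H0a. ring.
      * intros t Ht. simpl. rewrite Rminus_0_r. lra.
    + apply (int_bound (fun t => snd (pic k a b 1) t - snd (pic k a b 0) t) (fun t => k t * a - 0) C L 0); auto.
      * intros t. apply derivable_pt_lim_minus; [apply Hd0|]. simpl. apply derivable_pt_lim_const.
      * rewrite H1b, H0b. ring.
      * intros t Ht. simpl. rewrite Rminus_0_r, Rabs_mult.
        assert (Rabs (k t) * Rabs a <= K * Rabs a) by (apply Rmult_le_compat_r; [apply Rabs_pos| auto]). lra.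
  - intros x Hx. destruct (HP (S n)) as [_ [Hd1 [_ _]]]. destruct (HP n) as [_ [Hd0 [_ _]]].
    destruct (HP (S (S n))) as [_ [_ [H2a H2b]]]. destruct (HP (S n)) as [_ [_ [H1a H1b]]].
    assert (Hf : 0 < INR (fact (S n))) by (apply lt_0_INR; apply lt_O_fact).
    assert (Hmon : forall t, C * K1 ^ n * Rabs t ^ S n / INR (fact (S n)) <= C * K1 ^ (S n) * Rabs t ^ S n / INR (fact (S n))).
    { intros t. unfold Rdiv. apply Rmult_le_compat_r; [left; apply Rinv_0_lt_compat; auto|].
      apply Rmult_le_compat_r; [apply pow_le, Rabs_pos|]. apply Rmult_le_compat_l; auto.
      simpl. pose proof (pow_le K1 n ltac:(lra)). nra. }
    split.
    + apply (int_bound (fun t => fst (pic k a b (S (S n))) t - fst (pic k a b (S n)) t)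
          (fun t => snd (pic k a b (S n)) t - snd (pic k a b n) t) (C * K1 ^ (S n)) L (S n)); auto.
      * intros t. apply derivable_pt_lim_minus; [apply Hd1| apply Hd0].
      * rewrite H2a, H1a. ring.
      * intros t Ht. destruct (IH t Ht) as [_ Hv]. eapply Rle_trans; [exact Hv| apply Hmon].
    + apply (int_bound (fun t => snd (pic k a b (S (S n))) t - snd (pic k a b (S n)) t)
          (fun t => k t * fst (pic k a b (S n)) t - k t * fst (pic k a b n) t) (C * K1 ^ (S n)) L (S n)); auto.
      * intros t. apply derivable_pt_lim_minus; [apply Hd1| apply Hd0].
      * rewrite H2b, H1b. ring.
      * intros t Ht. destruct (IH t Ht) as [Hy _].
        replace (k t * fst (pic k a b (S n)) t - k t * fst (pic k a b n) t) with (k t * (fst (pic k a b (S n)) t - fst (pic k a b n) t)) by ring.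
        rewrite Rabs_mult. specialize (HkK t Ht).
        set (B := C * K1 ^ n * Rabs t ^ S n / INR (fact (S n))) in *.
        assert (HB0 : 0 <= B).
        { unfold B. unfold Rdiv. apply Rmult_le_pos; [|left; apply Rinv_0_lt_compat; auto].
          apply Rmult_le_pos; [apply Rmult_le_pos; [auto| apply pow_le; lra]| apply pow_le, Rabs_pos]. }
        assert (Rabs (k t) * Rabs (fst (pic k a b (S n)) t - fst (pic k a b n) t) <= K1 * B).
        { apply Rmult_le_compat; auto using Rabs_pos. lra. }
        replace (C * K1 ^ S n * Rabs t ^ S n / INR (fact (S n))) with (K1 * B) by (unfold B; change (K1 ^ S n) with (K1 * K1 ^ n); field; lra).
        exact H.
Qed.

Lemma E1_mono X n p : 0 <= X -> E1 X n <= E1 X (n + p).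
Proof.
  intros HX. induction p as [|p IH].
  - rewrite Nat.add_0_r. lra.
  - rewrite Nat.add_succ_r. change (E1 X (S (n + p))) with (E1 X (n + p) + / INR (fact (S (n + p))) * X ^ (S (n + p))).
    assert (0 <= / INR (fact (S (n + p))) * X ^ S (n + p)).
    { apply Rmult_le_pos; [left; apply Rinv_0_lt_compat, lt_0_INR, lt_O_fact| apply pow_le; auto]. }
    lra.
Qed.

Lemma E1_le_exp X n : 0 <= X -> E1 X n <= exp X.
Proof.
  intros HX. apply (lim_ge (E1 X) (exp X) (E1 X n) n (E1_cvg X)).
  intros m Hm. replace m with (n + (m - n))%nat by lia. apply E1_mono; auto.
Qed.

Lemma pic_tail (k : R -> R) a b : (forall t, continuity_pt k t) -> forall L, 0 <= L ->
  exists tau, Un_cv tau 0 /\ forall m n x, (n <= m)%nat -> Rabs x <= L ->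
    Rabs (fst (pic k a b m) x - fst (pic k a b n) x) <= tau n /\
    Rabs (snd (pic k a b m) x - snd (pic k a b n) x) <= tau n.
Proof.
  intros Hk L HL. destruct (cont_bound k L Hk) as [K [HK HkK]].
  set (C := Rmax (Rabs b) (K * Rabs a)). set (K1 := Rmax 1 K).
  assert (HK1 : 1 <= K1) by apply Rmax_l.
  assert (HC0 : 0 <= C) by (pose proof (Rabs_pos b); pose proof (Rmax_l (Rabs b) (K * Rabs a)); unfold C; lra).
  set (X := K1 * L). assert (HX : 0 <= X) by (unfold X; nra).
  exists (fun n => C / K1 * (exp X - E1 X n)). split.
  - replace 0 with (C / K1 * (exp X - exp X)) by ring.
    apply CV_mult.
    + intros e He. exists O. intros. unfold Rdist. rewrite Rminus_eq_0, Rabs_R0. lra.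
    + apply CV_minus; [| apply E1_cvg].
      intros e He. exists O. intros. unfold Rdist. rewrite Rminus_eq_0, Rabs_R0. lra.
  - assert (Hstep : forall j x, Rabs x <= L ->
      Rabs (fst (pic k a b (S j)) x - fst (pic k a b j) x) <= C / K1 * (/ INR (fact (S j)) * X ^ S j) /\
      Rabs (snd (pic k a b (S j)) x - snd (pic k a b j) x) <= C / K1 * (/ INR (fact (S j)) * X ^ S j)).
    { intros j x Hx. destruct (pic_bound k a b L K Hk HL HK HkK j x Hx) as [H1 H2].
      fold C K1 in H1, H2.
      assert (Hf : 0 < INR (fact (S j))) by (apply lt_0_INR; apply lt_O_fact).
      assert (Hle : C * K1 ^ j * Rabs x ^ S j / INR (fact (S j)) <= C / K1 * (/ INR (fact (S j)) * X ^ S j)).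
      { unfold X. rewrite Rpow_mult_distr. change (K1 ^ S j) with (K1 * K1 ^ j).
        replace (C / K1 * (/ INR (fact (S j)) * (K1 * K1 ^ j * L ^ S j))) with (C * K1 ^ j * L ^ S j / INR (fact (S j))) by (field; lra).
        unfold Rdiv. apply Rmult_le_compat_r; [left; apply Rinv_0_lt_compat; auto|].
        apply Rmult_le_compat_l; [apply Rmult_le_pos; [auto| apply pow_le; lra]|].
        apply pow_incr. split; [apply Rabs_pos| auto]. }
      split; lra. }
    assert (HCK : 0 <= C / K1) by (unfold Rdiv; apply Rmult_le_pos; [auto| left; apply Rinv_0_lt_compat; lra]).
    assert (Htr : forall u v w : R, Rabs (u - w) <= Rabs (u - v) + Rabs (v - w)).
    { intros u v w. replace (u - w) with ((u - v) + (v - w)) by ring. apply Rabs_triang. }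
    assert (Hind : forall n p x, Rabs x <= L ->
      Rabs (fst (pic k a b (n + p)) x - fst (pic k a b n) x) <= C / K1 * (E1 X (n + p) - E1 X n) /\
      Rabs (snd (pic k a b (n + p)) x - snd (pic k a b n) x) <= C / K1 * (E1 X (n + p) - E1 X n)).
    { intros n p x Hx. induction p as [|p IH].
      - rewrite Nat.add_0_r, !Rminus_eq_0, Rabs_R0. lra.
      - rewrite Nat.add_succ_r. destruct IH as [IH1 IH2]. destruct (Hstep (n + p)%nat x Hx) as [S1 S2].
        change (E1 X (S (n + p))) with (E1 X (n + p) + / INR (fact (S (n + p))) * X ^ (S (n + p))).
        split.
        + eapply Rle_trans; [apply (Htr _ (fst (pic k a b (n + p)) x))|]. lra.
        + eapply Rle_trans; [apply (Htr _ (snd (pic k a b (n + p)) x))|]. lra. }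
    intros m n x Hnm Hx. replace m with (n + (m - n))%nat by lia.
    destruct (Hind n (m - n)%nat x Hx) as [H1 H2].
    pose proof (E1_le_exp X (n + (m - n)) HX).
    assert (C / K1 * (E1 X (n + (m - n)) - E1 X n) <= C / K1 * (exp X - E1 X n)) by (apply Rmult_le_compat_l; lra).
    split; lra.
Qed.

Definition limf (u : nat -> R -> R) (x : R) : R := real (Lim_seq (fun n => u n x)).

Lemma limf_spec (u : nat -> R -> R) x l : Un_cv (fun n => u n x) l -> limf u x = l.
Proof.
  intros H. unfold limf. rewrite (is_lim_seq_unique _ l); [reflexivity|].
  apply is_lim_seq_Reals. exact H.
Qed.

Lemma pic_lim (k : R -> R) a b : (forall t, continuity_pt k t) -> forall L, 0 <= L ->
  exists tau, Un_cv tau 0 /\ forall n x, Rabs x <= L ->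
    Rabs (fst (pic k a b n) x - limf (fun n => fst (pic k a b n)) x) <= tau n /\
    Rabs (snd (pic k a b n) x - limf (fun n => snd (pic k a b n)) x) <= tau n /\
    Un_cv (fun n => fst (pic k a b n) x) (limf (fun n => fst (pic k a b n)) x) /\
    Un_cv (fun n => snd (pic k a b n) x) (limf (fun n => snd (pic k a b n)) x).
Proof.
  intros Hk L HL. destruct (pic_tail k a b Hk L HL) as [tau [Ht Hb]].
  exists tau. split; auto. intros n x Hx.
  destruct (cv_of_tail (fun n => fst (pic k a b n) x) tau Ht) as [l1 [Hl1 Ht1]].
  { intros m n' Hmn. apply Hb; auto. }
  destruct (cv_of_tail (fun n => snd (pic k a b n) x) tau Ht) as [l2 [Hl2 Ht2]].
  { intros m n' Hmn. apply Hb; auto. }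
  rewrite (limf_spec _ x l1 Hl1), (limf_spec _ x l2 Hl2).
  rewrite <- (Rabs_Ropp (fst _ x - l1)), <- (Rabs_Ropp (snd _ x - l2)).
  replace (- (fst (pic k a b n) x - l1)) with (l1 - fst (pic k a b n) x) by ring.
  replace (- (snd (pic k a b n) x - l2)) with (l2 - snd (pic k a b n) x) by ring.
  auto.
Qed.

Lemma lin_exist (k : R -> R) a b : (forall t, continuity_pt k t) ->
  exists y v : R -> R, (forall x, derivable_pt_lim y x (v x)) /\
    (forall x, derivable_pt_lim v x (k x * y x)) /\ y 0 = a /\ v 0 = b.
Proof.
  intros Hk.
  set (y := limf (fun n => fst (pic k a b n))). set (v := limf (fun n => snd (pic k a b n))).
  pose proof (pic_prop k a b Hk) as HP.
  assert (Hcv : forall t, Un_cv (fun n => fst (pic k a b n) t) (y t) /\ Un_cv (fun n => snd (pic k a b n) t) (v t)).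
  { intros t. destruct (pic_lim k a b Hk (Rabs t) (Rabs_pos t)) as [tau [_ Hb]].
    destruct (Hb O t (Rle_refl _)) as [_ [_ [H1 H2]]]. split; assumption. }
  assert (Hcvs : forall t, Un_cv (fun n => fst (pic k a b (S n)) t) (y t) /\ Un_cv (fun n => snd (pic k a b (S n)) t) (v t)).
  { intros t. destruct (Hcv t) as [H1 H2]. split.
    - intros e He. destruct (H1 e He) as [N HN]. exists N. intros n Hn. apply HN. lia.
    - intros e He. destruct (H2 e He) as [N HN]. exists N. intros n Hn. apply HN. lia. }
  assert (Hloc : forall x, derivable_pt_lim y x (v x) /\ derivable_pt_lim v x (k x * y x) /\ continuity_pt y x).
  { intros x. set (L := Rabs x + 1).
    assert (HL : 0 <= L) by (unfold L; pose proof (Rabs_pos x); lra).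
    assert (HxL : Rabs x < L) by (unfold L; lra).
    destruct (pic_lim k a b Hk L HL) as [tau [Ht Hb]].
    destruct (cont_bound k L Hk) as [K [HK HkK]].
    assert (Hyc : continuity_pt y x).
    { apply (unif_cont (fun n => fst (pic k a b n)) y tau x L); auto.
      - intros n t. apply HP.
      - intros n t Ht'. apply Hb; auto. }
    assert (Hvc : continuity_pt v x).
    { apply (unif_cont (fun n => snd (pic k a b n)) v tau x L); auto.
      - intros n t. apply HP.
      - intros n t Ht'. apply Hb; auto. }
    split; [|split; [|exact Hyc]].
    - apply (deriv_lim (fun n => fst (pic k a b (S n))) (fun n => snd (pic k a b n)) y v tau x L); auto.
      + intros n t. apply HP.
      + intros t. apply Hcvs.
      + intros n t Ht'. apply Hb; auto.
    - apply (deriv_lim (fun n => snd (pic k a b (S n))) (fun n t => k t * fst (pic k a b n) t) v (fun t => k t * y t) (fun n => K * tau n) x L); auto.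
      + intros n t. apply HP.
      + intros t. apply Hcvs.
      + replace 0 with (K * 0) by ring. apply CV_mult; auto.
        intros e He. exists O. intros. unfold Rdist. rewrite Rminus_eq_0, Rabs_R0. lra.
      + intros n t Ht'. destruct (Hb n t Ht') as [H1 _].
        replace (k t * fst (pic k a b n) t - k t * y t) with (k t * (fst (pic k a b n) t - y t)) by ring.
        rewrite Rabs_mult. apply Rmult_le_compat; auto using Rabs_pos.
      + apply continuity_pt_mult; auto. }
  exists y, v. split; [intros x; apply Hloc|]. split; [intros x; apply Hloc|].
  split.
  - apply (UL_sequence (fun n => fst (pic k a b n) 0)); [apply Hcv|].
    intros e He. exists O. intros n _. unfold Rdist. destruct (HP n) as [_ [_ [H0 _]]]. rewrite H0, Rminus_eq_0, Rabs_R0. lra.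
  - apply (UL_sequence (fun n => snd (pic k a b n) 0)); [apply Hcv|].
    intros e He. exists O. intros n _. unfold Rdist. destruct (HP n) as [_ [_ [_ H0]]]. rewrite H0, Rminus_eq_0, Rabs_R0. lra.
Qed.

Definition sol (k y v : R -> R) : Prop :=
  (forall x, derivable_pt_lim y x (v x)) /\ (forall x, derivable_pt_lim v x (k x * y x)).

Lemma const_of_d0 (f : R -> R) : (forall t, derivable_pt_lim f t 0) -> forall x z, f x = f z.
Proof.
  intros Hd.
  assert (H : forall x z, x <= z -> f x = f z).
  { intros x z Hxz. apply Rle_antisym.
    - apply (mono_le f (fun _ => 0)); auto; intros; lra.
    - apply (mono_ge f (fun _ => 0)); auto; intros; lra. }
  intros x z. destruct (Rle_or_lt x z); [apply H; auto| symmetry; apply H; lra].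
Qed.

Lemma wr_const k y1 v1 y2 v2 : sol k y1 v1 -> sol k y2 v2 ->
  forall x z, y1 x * v2 x - v1 x * y2 x = y1 z * v2 z - v1 z * y2 z.
Proof.
  intros [H1 H2] [H3 H4].
  apply (const_of_d0 (fun x => y1 x * v2 x - v1 x * y2 x)). intros t.
  apply (dlim_ext _ _ ((v1 t * v2 t + y1 t * (k t * y2 t)) - (k t * y1 t * y2 t + v1 t * v2 t))); [|ring].
  apply derivable_pt_lim_minus; apply derivable_pt_lim_mult; auto.
Qed.

Lemma sol_lin k y1 v1 y2 v2 al be : sol k y1 v1 -> sol k y2 v2 ->
  sol k (fun x => al * y1 x + be * y2 x) (fun x => al * v1 x + be * v2 x).
Proof.
  intros [H1 H2] [H3 H4]. split; intros x.
  - apply d_lin; auto.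
  - apply (dlim_ext _ _ (al * (k x * y1 x) + be * (k x * y2 x))); [apply d_lin; auto| ring].
Qed.

Lemma fund (k : R -> R) : (forall t, continuity_pt k t) ->
  exists y1 v1 y2 v2, sol k y1 v1 /\ sol k y2 v2 /\ forall x, y1 x * v2 x - v1 x * y2 x = 1.
Proof.
  intros Hk. destruct (lin_exist k 1 0 Hk) as [y1 [v1 [H1 [H2 [H3 H4]]]]].
  destruct (lin_exist k 0 1 Hk) as [y2 [v2 [H5 [H6 [H7 H8]]]]].
  exists y1, v1, y2, v2. split; [split; auto|]. split; [split; auto|].
  intros x. rewrite (wr_const k y1 v1 y2 v2) with (z := 0); [|split; auto| split; auto].
  rewrite H3, H4, H7, H8. ring.
Qed.

Lemma zero_sol k y1 v1 y2 v2 y v : sol k y1 v1 -> sol k y2 v2 -> (forall x, y1 x * v2 x - v1 x * y2 x = 1) ->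
  sol k y v -> forall z0, y z0 = 0 -> v z0 = 0 -> forall x, y x = 0 /\ v x = 0.
Proof.
  intros S1 S2 HW S z0 Hy Hv x.
  pose proof (wr_const k y v y1 v1 S S1 x z0) as E1.
  pose proof (wr_const k y v y2 v2 S S2 x z0) as E2.
  rewrite Hy, Hv in E1, E2. specialize (HW x).
  split.
  - transitivity (y x * (y1 x * v2 x - v1 x * y2 x)); [rewrite HW; ring|].
    transitivity (y1 x * (y x * v2 x - v x * y2 x) - y2 x * (y x * v1 x - v x * y1 x)); [ring|].
    rewrite E1, E2. ring.
  - transitivity (v x * (y1 x * v2 x - v1 x * y2 x)); [rewrite HW; ring|].
    transitivity (v1 x * (y x * v2 x - v x * y2 x) - v2 x * (y x * v1 x - v x * y1 x)); [ring|].
    rewrite E1, E2. ring.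
Qed.

Lemma sol_unique k y1 v1 y2 v2 y v y' v' : sol k y1 v1 -> sol k y2 v2 -> (forall x, y1 x * v2 x - v1 x * y2 x = 1) ->
  sol k y v -> sol k y' v' -> forall z0, y z0 = y' z0 -> v z0 = v' z0 -> forall x, y x = y' x /\ v x = v' x.
Proof.
  intros S1 S2 HW S S' z0 Hy Hv x.
  destruct (zero_sol k y1 v1 y2 v2 (fun x => 1 * y x + (-1) * y' x) (fun x => 1 * v x + (-1) * v' x) S1 S2 HW
    (sol_lin k y v y' v' 1 (-1) S S') z0) with (x := x) as [A B]; try lra.
Qed.

Lemma data_sol k y1 v1 y2 v2 : sol k y1 v1 -> sol k y2 v2 -> (forall x, y1 x * v2 x - v1 x * y2 x = 1) ->
  forall z0 a b, exists y v, sol k y v /\ y z0 = a /\ v z0 = b.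
Proof.
  intros S1 S2 HW z0 a b.
  set (A := a * v2 z0 - b * y2 z0). set (B := b * y1 z0 - a * v1 z0).
  exists (fun x => A * y1 x + B * y2 x), (fun x => A * v1 x + B * v2 x).
  split; [apply sol_lin; auto|]. specialize (HW z0). unfold A, B. split.
  - transitivity (a * (y1 z0 * v2 z0 - v1 z0 * y2 z0)); [ring| rewrite HW; ring].
  - transitivity (b * (y1 z0 * v2 z0 - v1 z0 * y2 z0)); [ring| rewrite HW; ring].
Qed.

Lemma exp_ge1 x : 1 + x <= exp x.
Proof. destruct (Req_dec x 0) as [->|H]; [rewrite exp_0; lra| left; apply exp_ineq1; auto]. Qed.

Lemma nat_ge x : exists n : nat, x <= INR n.
Proof.
  destruct (archimed x) as [H1 _]. destruct (Z_lt_le_dec (up x) 0) as [Hl|Hl].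
  - exists O. simpl. apply IZR_lt in Hl. lra.
  - exists (Z.to_nat (up x)). rewrite INR_IZR_INZ, Z2Nat.id by lia. lra.
Qed.

Lemma lin_exp k : 0 < k -> forall z, 0 <= z -> 1 + z <= (1 + 1 / k) * exp (k * z).
Proof.
  intros Hk z Hz. pose proof (exp_ge1 (k * z)).
  assert (0 <= 1 / k) by (unfold Rdiv; rewrite Rmult_1_l; left; apply Rinv_0_lt_compat; auto).
  assert ((1 + 1/k) * (1 + k * z) <= (1 + 1/k) * exp (k * z)) by (apply Rmult_le_compat_l; lra).
  assert ((1 + 1/k) * (1 + k * z) = 1 + z + 1/k + k * z) by (field; lra).
  nra.
Qed.

Lemma exp_small rho eps : 0 < rho -> 0 < eps -> exists Z, forall z, Z <= z -> exp (- rho * z) < eps.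
Proof.
  intros Hr He. exists ((Rabs (ln eps) + 1) / rho). intros z Hz.
  rewrite <- (exp_ln eps He). apply exp_increasing.
  assert (rho * ((Rabs (ln eps) + 1) / rho) <= rho * z) by (apply Rmult_le_compat_l; lra).
  replace (rho * ((Rabs (ln eps) + 1) / rho)) with (Rabs (ln eps) + 1) in H by (field; lra).
  pose proof (Rle_abs (- ln eps)). rewrite Rabs_Ropp in H0. lra.
Qed.

Lemma mono_le_loc (f f' : R -> R) (a b : R) :
  (forall t, a <= t <= b -> derivable_pt_lim f t (f' t)) -> a <= b ->
  (forall t, a < t < b -> 0 <= f' t) -> f a <= f b.
Proof.
  intros Hd Hab Hp. destruct (Req_dec a b) as [->|Hne]; [lra|].
  destruct (MVT_cor2 f f' a b) as [c [Hc1 Hc2]]; [lra| intros; apply Hd; auto |].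
  assert (0 <= f' c * (b - a)) by (apply Rmult_le_pos; [apply Hp; lra| lra]). lra.
Qed.

Lemma d_exp r x : derivable_pt_lim (fun t => exp (r * t)) x (r * exp (r * x)).
Proof.
  apply (dlim_ext _ _ (exp (r*x) * (r * 1))); [|ring].
  apply (derivable_pt_lim_comp (fun t => r * t) exp).
  + apply derivable_pt_lim_scal. apply derivable_pt_lim_id.
  + apply derivable_pt_lim_exp.
Qed.

Lemma exp_lim (f f' : R -> R) B rho Z : 0 < rho ->
  (forall t, derivable_pt_lim f t (f' t)) -> (forall t, Z <= t -> Rabs (f' t) <= B * exp (- rho * t)) ->
  exists beta, forall z, Z <= z -> Rabs (f z - beta) <= B / rho * exp (- rho * z).
Proof.
  intros Hr Hd Hb.
  set (E := fun t => B / rho * exp (- rho * t)).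
  assert (HE : forall t, derivable_pt_lim E t (- B * exp (- rho * t))).
  { intros t. unfold E. apply (dlim_ext _ _ (B / rho * (- rho * exp (- rho * t)))); [|field; lra].
    apply derivable_pt_lim_scal. apply d_exp. }
  set (g1 := fun t => f t + E t). set (g2 := fun t => f t - E t).
  assert (Hg1 : forall a b, Z <= a <= b -> g1 b <= g1 a).
  { intros a b Hab. apply (mono_ge g1 (fun t => f' t + - B * exp (- rho * t))); [| lra|].
    - intros t. apply derivable_pt_lim_plus; auto.
    - intros t Ht. specialize (Hb t ltac:(lra)). pose proof (Rle_abs (f' t)). lra. }
  assert (Hg2 : forall a b, Z <= a <= b -> g2 a <= g2 b).
  { intros a b Hab. apply (mono_le g2 (fun t => f' t - - B * exp (- rho * t))); [| lra|].
    - intros t. apply derivable_pt_lim_minus; auto.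
    - intros t Ht. specialize (Hb t ltac:(lra)). pose proof (Rle_abs (- f' t)). rewrite Rabs_Ropp in *. lra. }
  assert (HE0 : forall t, 0 <= E t).
  { intros t. unfold E. pose proof (exp_pos (- rho * t)).
    assert (0 <= B) by (pose proof (Hb Z (Rle_refl _)); pose proof (Rabs_pos (f' Z)); pose proof (exp_pos (- rho * Z)); nra).
    unfold Rdiv. apply Rmult_le_pos; [apply Rmult_le_pos; [auto| left; apply Rinv_0_lt_compat; auto]| lra]. }
  assert (Hgr : Un_growing (fun n => g2 (Z + INR n))).
  { intros n. apply Hg2. rewrite S_INR. pose proof (pos_INR n). lra. }
  assert (Hub : has_ub (fun n => g2 (Z + INR n))).
  { exists (g1 Z). intros x [n ->]. pose proof (pos_INR n).
    pose proof (Hg1 Z (Z + INR n) ltac:(lra)). unfold g1, g2 in *. pose proof (HE0 (Z + INR n)). lra. }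
  destruct (growing_cv _ Hgr Hub) as [beta Hbeta]. exists beta. intros z Hz.
  destruct (nat_ge (z - Z)) as [N HN].
  assert (Hlo : g2 z <= beta).
  { apply (lim_ge _ beta (g2 z) N Hbeta). intros n Hn. apply Hg2. apply le_INR in Hn. lra. }
  assert (Hhi : beta <= g1 z).
  { apply (lim_le _ beta (g1 z) N Hbeta). intros n Hn. apply le_INR in Hn.
    pose proof (Hg1 z (Z + INR n) ltac:(lra)). unfold g1, g2 in *. pose proof (HE0 (Z + INR n)). lra. }
  unfold g1, g2, E in *. apply Rabs_le. lra.
Qed.

Lemma mono_ge_loc (f f' : R -> R) (a b : R) :
  (forall t, a <= t <= b -> derivable_pt_lim f t (f' t)) -> a <= b ->
  (forall t, a < t < b -> f' t <= 0) -> f b <= f a.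
Proof.
  intros Hd Hab Hp. assert (- f a <= - f b); [|lra].
  apply (mono_le_loc (fun t => - f t) (fun t => - f' t)); auto.
  - intros t Ht. apply derivable_pt_lim_opp. apply Hd; auto.
  - intros t Ht. specialize (Hp t Ht). lra.
Qed.

Lemma d_inv1 t : -1 < t -> derivable_pt_lim (fun z => / (1 + z)) t (- (/ (1 + t)) ^ 2).
Proof.
  intros Ht.
  apply (dlim_fext (fun z => fct_cte 1 z / (1 + z))); [intros z; unfold fct_cte, Rdiv; ring|].
  apply (dlim_ext _ _ ((0 * (1 + t) - 1 * fct_cte 1 t) / (1 + t)²)).
  - apply (derivable_pt_lim_div (fct_cte 1) (fun z => 1 + z)).
    + apply derivable_pt_lim_const.
    + apply (dlim_ext _ _ (0 + 1)); [|ring]. apply derivable_pt_lim_plus; [apply derivable_pt_lim_const| apply derivable_pt_lim_id].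
    + lra.
  - unfold fct_cte, Rsqr. field. lra.
Qed.

Lemma alg_growth V Y M K P E : M * P = 1 -> 0 < M -> Rabs K * P <= E ->
  2 * V * (K * Y) + 2 * (Y * M) * (V * M + Y * (- M ^ 2)) <= (V ^ 2 + (Y * M) ^ 2) * M + (V ^ 2 + (Y * M) ^ 2) * E.
Proof.
  intros HMP HM HK. set (u := Y * M).
  assert (HY : Y = u * P) by (unfold u; rewrite Rmult_assoc, HMP; ring).
  assert (H1 : 2 * V * (K * Y) <= Rabs K * P * (V ^ 2 + u ^ 2)).
  { rewrite HY. assert (0 <= P) by nra.
    assert (2 * (V * u) * K <= (V^2 + u^2) * Rabs K).
    { assert (0 <= (V - u)^2) by apply pow2_ge_0. assert (0 <= (V + u)^2) by apply pow2_ge_0.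
      destruct (Rle_or_lt 0 K) as [HK0|HK0].
      - rewrite Rabs_right by lra. nra.
      - rewrite Rabs_left by lra. nra. }
    nra. }
  assert (H2 : 2 * u * (V * M) <= (V ^ 2 + u ^ 2) * M) by (assert (0 <= (V - u)^2) by apply pow2_ge_0; nra).
  assert (H3 : 0 <= (V^2 + u^2) * (E - Rabs K * P)) by (apply Rmult_le_pos; nra).
  assert (H4 : 0 <= u * u * M ^ 2) by nra.
  replace (2 * u * (V * M + Y * - M ^ 2)) with (2 * u * (V * M) - 2 * (u * u) * M) by (unfold u; ring).
  nra.
Qed.

Lemma growth k y v A kap Z : 0 < kap -> 0 <= A -> 0 <= Z ->
  (forall z, Z <= z -> Rabs (k z) <= A * exp (- kap * z)) -> sol k y v ->
  exists D, 0 <= D /\ forall z, Z <= z -> v z ^ 2 <= D * (1 + z) /\ y z ^ 2 <= D * (1 + z) ^ 3.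
Proof.
  intros Hk HA HZ Hkb [Sy Sv].
  set (rho := kap / 2). assert (Hrho : 0 < rho) by (unfold rho; lra).
  set (C := 1 + 1 / rho). assert (HC : 0 < C) by (unfold C; unfold Rdiv; rewrite Rmult_1_l; pose proof (Rinv_0_lt_compat rho Hrho); lra).
  set (A2 := A * C).
  assert (HkP : forall t, Z <= t -> Rabs (k t) * (1 + t) <= A2 * exp (- rho * t)).
  { intros t Ht. pose proof (lin_exp rho Hrho t ltac:(lra)). fold C in H. specialize (Hkb t Ht).
    assert (Rabs (k t) * (1 + t) <= A * exp (- kap * t) * (C * exp (rho * t))).
    { apply Rmult_le_compat; auto; [apply Rabs_pos| lra]. }
    replace (A * exp (- kap * t) * (C * exp (rho * t))) with (A2 * (exp (- kap * t) * exp (rho * t))) in H0 by (unfold A2; ring).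
    rewrite <- exp_plus in H0. replace (- kap * t + rho * t) with (- rho * t) in H0 by (unfold rho; field). exact H0. }
  set (Phi := fun t => - (A2 / rho) * exp (- rho * t)).
  set (m := fun t => / (1 + t)).
  set (H := fun t => v t ^ 2 + (y t * m t) ^ 2).
  set (Q := fun t => H t * m t * exp (- Phi t)).
  assert (HdPhi : forall t, derivable_pt_lim (fun t => - Phi t) t (- (A2 * exp (- rho * t)))).
  { intros t. unfold Phi. apply (dlim_ext _ _ (- (- (A2 / rho) * (- rho * exp (- rho * t))))); [|field; lra].
    apply derivable_pt_lim_opp. apply derivable_pt_lim_scal. apply d_exp. }
  set (Q' := fun t => (2 * v t * (k t * y t) + 2 * (y t * m t) * (v t * m t + y t * (- m t ^ 2))) * m t * exp (- Phi t)
                     + H t * (- m t ^ 2) * exp (- Phi t) + H t * m t * (exp (- Phi t) * (- (A2 * exp (- rho * t))))).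
  assert (HdQ : forall t, -1 < t -> derivable_pt_lim Q t (Q' t)).
  { intros t Ht. unfold Q, Q'.
    assert (Hm : derivable_pt_lim m t (- m t ^ 2)) by (apply d_inv1; auto).
    assert (HH : derivable_pt_lim H t (2 * v t * (k t * y t) + 2 * (y t * m t) * (v t * m t + y t * (- m t ^ 2)))).
    { unfold H. apply (dlim_ext _ _ (INR 2 * v t ^ 1 * (k t * y t) + INR 2 * (y t * m t) ^ 1 * (v t * m t + y t * (- m t ^ 2)))).
      - apply (derivable_pt_lim_plus (fun t => v t ^ 2) (fun t => (y t * m t) ^ 2)).
        + apply (derivable_pt_lim_comp v (fun u => u ^ 2) t (k t * y t) (INR 2 * v t ^ 1)); [apply Sv|].
          apply derivable_pt_lim_pow.
        + apply (dlim_ext _ _ ((INR 2 * (y t * m t) ^ Init.Nat.pred 2) * (v t * m t + y t * (- m t ^ 2)))); [|simpl; ring].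
          apply (derivable_pt_lim_comp (fun t => y t * m t) (fun u => u ^ 2)); [|apply derivable_pt_lim_pow].
          apply derivable_pt_lim_mult; auto.
      - simpl. ring. }
    assert (He : derivable_pt_lim (fun t => exp (- Phi t)) t (exp (- Phi t) * (- (A2 * exp (- rho * t))))).
    { apply (dlim_ext _ _ (exp (- Phi t) * (- (A2 * exp (- rho * t))))); [|ring].
      apply (derivable_pt_lim_comp (fun t => - Phi t) exp); [apply HdPhi| apply derivable_pt_lim_exp]. }
    apply (dlim_ext _ _ (((2 * v t * (k t * y t) + 2 * (y t * m t) * (v t * m t + y t * - m t ^ 2)) * m t + H t * - m t ^ 2) * exp (- Phi t) + (H t * m t) * (exp (- Phi t) * - (A2 * exp (- rho * t))))); [|ring].
    apply (derivable_pt_lim_mult (fun t => H t * m t) (fun t => exp (- Phi t))); auto.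
    apply derivable_pt_lim_mult; auto. }
  assert (HA2 : 0 <= A2) by (unfold A2; nra).
  assert (Hm1 : forall t, 0 <= t -> m t * (1 + t) = 1 /\ 0 < m t).
  { intros t Ht. unfold m. split; [field; lra| apply Rinv_0_lt_compat; lra]. }
  assert (HQ : forall z, Z <= z -> Q z <= Q Z).
  { intros z Hz. apply (mono_ge_loc Q Q'); auto.
    - intros t Ht. apply HdQ. lra.
    - intros t Ht. destruct (Hm1 t ltac:(lra)) as [HmP Hmp].
      pose proof (alg_growth (v t) (y t) (m t) (k t) (1 + t) (A2 * exp (- rho * t)) HmP Hmp (HkP t ltac:(lra))) as Halg.
      pose proof (exp_pos (- Phi t)) as Hep.
      unfold Q'. fold (H t).
      assert (Hme : 0 < m t * exp (- Phi t)) by (apply Rmult_lt_0_compat; auto).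
      set (Hd := 2 * v t * (k t * y t) + 2 * (y t * m t) * (v t * m t + y t * - m t ^ 2)) in *.
      replace (Hd * m t * exp (- Phi t) + H t * - m t ^ 2 * exp (- Phi t) + H t * m t * (exp (- Phi t) * - (A2 * exp (- rho * t))))
        with ((m t * exp (- Phi t)) * (Hd - (H t * m t + H t * (A2 * exp (- rho * t))))) by ring.
      unfold H in Halg |- *. nra. }
  exists (Q Z). split.
  - unfold Q. destruct (Hm1 Z HZ) as [_ Hmp]. pose proof (exp_pos (- Phi Z)).
    assert (0 <= H Z) by (unfold H; pose proof (pow2_ge_0 (v Z)); pose proof (pow2_ge_0 (y Z * m Z)); lra).
    apply Rmult_le_pos; [apply Rmult_le_pos; lra| lra].
  - intros z Hz. specialize (HQ z Hz). destruct (Hm1 z ltac:(lra)) as [HmP Hmp].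
    assert (HPhi : 1 <= exp (- Phi z)).
    { pose proof (exp_ge1 (- Phi z)). unfold Phi in *. pose proof (exp_pos (- rho * z)).
      assert (0 <= A2 / rho) by (unfold Rdiv; apply Rmult_le_pos; [auto| left; apply Rinv_0_lt_compat; auto]).
      nra. }
    assert (HHz : H z <= Q Z * (1 + z)).
    { change (Q z) with (H z * m z * exp (- Phi z)) in HQ.
      assert (0 <= H z) by (unfold H; pose proof (pow2_ge_0 (v z)); pose proof (pow2_ge_0 (y z * m z)); lra).
      assert (0 <= H z * m z) by (apply Rmult_le_pos; lra).
      assert (H z * m z * 1 <= H z * m z * exp (- Phi z)) by (apply Rmult_le_compat_l; lra).
      assert (H z * m z <= Q Z) by lra.
      assert (HH4 : H z * m z * (1 + z) <= Q Z * (1 + z)) by (apply Rmult_le_compat_r; lra).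
      replace (H z * m z * (1 + z)) with (H z) in HH4 by (rewrite Rmult_assoc, HmP; ring). exact HH4. }
    unfold H in HHz. pose proof (pow2_ge_0 (v z)). pose proof (pow2_ge_0 (y z * m z)).
    split; [lra|].
    assert (Hy : y z = (y z * m z) * (1 + z)) by (rewrite Rmult_assoc, HmP; ring).
    assert ((y z * m z) ^ 2 <= Q Z * (1 + z)) by lra.
    rewrite Hy. replace ((y z * m z * (1 + z)) ^ 2) with ((y z * m z) ^ 2 * (1 + z)^2) by ring.
    replace (Q Z * (1 + z) ^ 3) with ((Q Z * (1 + z)) * (1 + z)^2) by ring.
    apply Rmult_le_compat_r; [apply pow2_ge_0| auto].
Qed.

Lemma asym k y v A kap Z : 0 < kap -> 0 <= A -> 0 <= Z ->
  (forall z, Z <= z -> Rabs (k z) <= A * exp (- kap * z)) -> sol k y v ->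
  exists beta gam B rho, 0 < rho /\ 0 <= B /\ forall z, Z <= z ->
    Rabs (v z - beta) <= B * exp (- rho * z) /\ Rabs (y z - beta * z - gam) <= B * exp (- rho * z).
Proof.
  intros Hk HA HZ Hkb S. destruct (growth k y v A kap Z Hk HA HZ Hkb S) as [D [HD HDb]].
  destruct S as [Sy Sv].
  set (q := kap / 4). assert (Hq : 0 < q) by (unfold q; lra).
  set (C := 1 + 1 / q). assert (HC : 0 < C) by (unfold C; unfold Rdiv; rewrite Rmult_1_l; pose proof (Rinv_0_lt_compat q Hq); lra).
  set (rho := kap / 2). assert (Hrho : 0 < rho) by (unfold rho; lra).
  set (B0 := A * ((D + 1) / 2) * C ^ 2).
  assert (HB0 : 0 <= B0) by (unfold B0; apply Rmult_le_pos; [nra| apply pow2_ge_0]).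
  assert (Hy : forall z, Z <= z -> Rabs (y z) <= (D + 1) / 2 * (1 + z) ^ 2).
  { intros z Hz. destruct (HDb z Hz) as [_ H2].
    set (P := 1 + z). assert (HP : 1 <= P) by (unfold P; lra). fold P in H2.
    assert (Hy2 : y z ^ 2 <= D * P ^ 4).
    { eapply Rle_trans; [exact H2|]. replace (P ^ 4) with (P ^ 3 * P) by ring.
      assert (0 <= P ^ 3) by (apply pow_le; lra). nra. }
    assert (HP2 : 0 < P ^ 2) by (apply pow_lt; lra).
    assert (Hab : 2 * Rabs (y z) * P ^ 2 <= y z ^ 2 + P ^ 4).
    { assert (0 <= (Rabs (y z) - P ^ 2) ^ 2) by apply pow2_ge_0.
      assert (Rabs (y z) ^ 2 = y z ^ 2) by (rewrite pow2_abs; reflexivity).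
      nra. }
    nra. }
  assert (Hvd : forall t, Z <= t -> Rabs (k t * y t) <= B0 * exp (- rho * t)).
  { intros t Ht. rewrite Rabs_mult. specialize (Hy t Ht). specialize (Hkb t Ht).
    pose proof (lin_exp q Hq t ltac:(lra)) as Hl. fold C in Hl.
    assert (Hl2 : (1 + t) ^ 2 <= C ^ 2 * exp (2 * q * t)).
    { replace (2 * q * t) with (q * t + q * t) by ring. rewrite exp_plus.
      replace (C ^ 2 * (exp (q * t) * exp (q * t))) with ((C * exp (q * t)) ^ 2) by ring.
      apply pow_incr. split; lra. }
    assert (Rabs (k t) * Rabs (y t) <= A * exp (- kap * t) * ((D + 1) / 2 * (C ^ 2 * exp (2 * q * t)))).
    { apply Rmult_le_compat; auto using Rabs_pos. eapply Rle_trans; [exact Hy|]. apply Rmult_le_compat_l; [lra| auto]. }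
    replace (A * exp (- kap * t) * ((D + 1) / 2 * (C ^ 2 * exp (2 * q * t)))) with (B0 * (exp (- kap * t) * exp (2 * q * t))) in H by (unfold B0; ring).
    rewrite <- exp_plus in H. replace (- kap * t + 2 * q * t) with (- rho * t) in H by (unfold q, rho; field). exact H. }
  destruct (exp_lim v (fun t => k t * y t) B0 rho Z Hrho Sv Hvd) as [beta Hbeta].
  destruct (exp_lim (fun t => y t - beta * t) (fun t => v t - beta) (B0 / rho) rho Z Hrho) as [gam Hgam].
  { intros t. apply derivable_pt_lim_minus; auto.
    apply (dlim_ext _ _ (beta * 1)); [|ring]. apply derivable_pt_lim_scal, derivable_pt_lim_id. }
  { exact Hbeta. }
  exists beta, gam, (B0 / rho + B0 / rho / rho), rho. split; auto.
  assert (0 <= B0 / rho) by (unfold Rdiv; apply Rmult_le_pos; [auto| left; apply Rinv_0_lt_compat; auto]).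
  assert (0 <= B0 / rho / rho) by (unfold Rdiv; apply Rmult_le_pos; [auto| left; apply Rinv_0_lt_compat; auto]).
  split; [lra|].
  intros z Hz. pose proof (exp_pos (- rho * z)). specialize (Hbeta z Hz). specialize (Hgam z Hz). split; nra.
Qed.

Lemma exp_le1 r z : 0 <= r -> 0 <= z -> exp (- r * z) <= 1.
Proof. intros Hr Hz. rewrite <- exp_0. destruct (Req_dec (r * z) 0) as [H|H].
  - replace (- r * z) with 0 by lra. lra.
  - left. apply exp_increasing. nra. Qed.

Lemma zero_of_exp w K r Z : 0 < r -> (forall z, Z <= z -> Rabs w <= K * exp (- r * z)) -> w = 0.
Proof.
  intros Hr H. destruct (Req_dec w 0) as [|Hw]; auto. exfalso.
  assert (Hw' : 0 < Rabs w) by (apply Rabs_pos_lt; auto).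
  assert (HK : 0 < K) by (pose proof (H Z (Rle_refl _)); pose proof (exp_pos (- r * Z)); nra).
  destruct (exp_small r (Rabs w / K) Hr) as [Z1 HZ1]; [unfold Rdiv; apply Rmult_lt_0_compat; [auto| apply Rinv_0_lt_compat; auto]|].
  set (z := Rmax Z Z1). specialize (H z (Rmax_l _ _)). specialize (HZ1 z (Rmax_r _ _)).
  assert (K * exp (- r * z) < K * (Rabs w / K)) by (apply Rmult_lt_compat_l; auto).
  replace (K * (Rabs w / K)) with (Rabs w) in H0 by (field; lra). lra.
Qed.

Lemma wr_zero_sol k y1 v1 y2 v2 y v : sol k y1 v1 -> sol k y2 v2 -> (forall x, y1 x * v2 x - v1 x * y2 x = 1) ->
  (forall x, y x * v1 x - v x * y1 x = 0) -> (forall x, y x * v2 x - v x * y2 x = 0) -> forall x, y x = 0 /\ v x = 0.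
Proof.
  intros S1 S2 HW E1 E2 x. specialize (E1 x). specialize (E2 x). specialize (HW x).
  split.
  - transitivity (y x * (y1 x * v2 x - v1 x * y2 x)); [rewrite HW; ring|].
    transitivity (y1 x * (y x * v2 x - v x * y2 x) - y2 x * (y x * v1 x - v x * y1 x)); [ring|].
    rewrite E1, E2. ring.
  - transitivity (v x * (y1 x * v2 x - v1 x * y2 x)); [rewrite HW; ring|].
    transitivity (v1 x * (y x * v2 x - v x * y2 x) - v2 x * (y x * v1 x - v x * y1 x)); [ring|].
    rewrite E1, E2. ring.
Qed.

Lemma wr_small k y v yi vi A kap Z B rho : 0 < kap -> 0 <= A -> 0 <= Z -> 0 < rho -> 0 <= B ->
  (forall z, Z <= z -> Rabs (k z) <= A * exp (- kap * z)) -> sol k y v -> sol k yi vi ->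
  (forall z, Z <= z -> Rabs (v z) <= B * exp (- rho * z) /\ Rabs (y z) <= B * exp (- rho * z)) ->
  forall x, y x * vi x - v x * yi x = 0.
Proof.
  intros Hk HA HZ Hr HB Hkb S Si Hsm x.
  destruct (asym k yi vi A kap Z Hk HA HZ Hkb Si) as [bi [gi [Bi [ri [Hri [HBi Hi]]]]]].
  set (G := Rabs bi + Rabs gi + Bi).
  set (C := 1 + 1 / (rho / 2)).
  apply (zero_of_exp _ (2 * B * G * C) (rho / 2) Z); [lra|].
  intros z Hz. rewrite (wr_const k y v yi vi S Si x z).
  destruct (Hi z Hz) as [Hv Hy]. destruct (Hsm z Hz) as [Hv0 Hy0].
  pose proof (exp_le1 ri z ltac:(lra) ltac:(lra)) as He1.
  pose proof (exp_pos (- ri * z)).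
  assert (Hvi : Rabs (vi z) <= G).
  { unfold G. replace (vi z) with ((vi z - bi) + bi) by ring.
    eapply Rle_trans; [apply Rabs_triang|]. pose proof (Rabs_pos gi). nra. }
  assert (Hyi : Rabs (yi z) <= G * (1 + z)).
  { replace (yi z) with ((yi z - bi * z - gi) + bi * z + gi) by ring.
    eapply Rle_trans; [apply Rabs_triang|].
    eapply Rle_trans; [apply Rplus_le_compat_r; apply Rabs_triang|].
    rewrite Rabs_mult, (Rabs_right z) by lra. unfold G.
    pose proof (Rabs_pos bi). pose proof (Rabs_pos gi). nra. }
  pose proof (lin_exp (rho / 2) ltac:(lra) z ltac:(lra)) as Hl. fold C in Hl.
  assert (HG : 0 <= G) by (unfold G; pose proof (Rabs_pos bi); pose proof (Rabs_pos gi); lra).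
  pose proof (exp_pos (- rho * z)) as Hep.
  assert (Hs : Rabs (y z * vi z - v z * yi z) <= B * exp (- rho * z) * G * (2 * (1 + z))).
  { unfold Rminus. eapply Rle_trans; [apply Rabs_triang|]. rewrite Rabs_Ropp, !Rabs_mult.
    assert (Rabs (y z) * Rabs (vi z) <= B * exp (- rho * z) * G) by (apply Rmult_le_compat; auto using Rabs_pos).
    assert (Rabs (v z) * Rabs (yi z) <= B * exp (- rho * z) * (G * (1 + z))) by (apply Rmult_le_compat; auto using Rabs_pos).
    assert (0 <= B * exp (- rho * z) * G * z) by (apply Rmult_le_pos; [apply Rmult_le_pos; [nra| auto]| lra]).
    nra. }
  eapply Rle_trans; [exact Hs|].
  assert (Hx : exp (- rho * z) * (1 + z) <= C * exp (- (rho / 2) * z)).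
  { assert (exp (- rho * z) * (1 + z) <= exp (- rho * z) * (C * exp (rho / 2 * z))) by (apply Rmult_le_compat_l; lra).
    replace (exp (- rho * z) * (C * exp (rho / 2 * z))) with (C * (exp (- rho * z) * exp (rho / 2 * z))) in H0 by ring.
    rewrite <- exp_plus in H0. replace (- rho * z + rho / 2 * z) with (- (rho / 2) * z) in H0 by field. exact H0. }
  assert (0 <= 2 * B * G) by nra.
  replace (B * exp (- rho * z) * G * (2 * (1 + z))) with ((2 * B * G) * (exp (- rho * z) * (1 + z))) by ring.
  replace (2 * B * G * C * exp (- (rho / 2) * z)) with ((2 * B * G) * (C * exp (- (rho / 2) * z))) by ring.
  apply Rmult_le_compat_l; auto.
Qed.

Lemma ratio_pinf k y1 v1 y2 v2 y v A kap Z : 0 < kap -> 0 <= A -> 0 <= Z ->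
  (forall z, Z <= z -> Rabs (k z) <= A * exp (- kap * z)) ->
  sol k y1 v1 -> sol k y2 v2 -> (forall x, y1 x * v2 x - v1 x * y2 x = 1) ->
  sol k y v -> (exists z0, ~ (y z0 = 0 /\ v z0 = 0)) ->
  (exists M, forall z, z > M -> y z <> 0) /\
  (forall eps, eps > 0 -> exists M, forall z, z > M -> Rabs (v z / y z - 0) < eps).
Proof.
  intros Hk HA HZ Hkb S1 S2 HW S [z0 Hz0].
  destruct (asym k y v A kap Z Hk HA HZ Hkb S) as [be [ga [B [rho [Hr [HB Hb]]]]]].
  destruct (Req_dec be 0) as [Hbe|Hbe].
  - subst be. destruct (Req_dec ga 0) as [Hga|Hga].
    + subst ga. exfalso. apply Hz0.
      assert (Hsm : forall z, Z <= z -> Rabs (v z) <= B * exp (- rho * z) /\ Rabs (y z) <= B * exp (- rho * z)).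
      { intros z Hz. destruct (Hb z Hz) as [H1 H2]. rewrite Rminus_0_r in H1.
        replace (y z - 0 * z - 0) with (y z) in H2 by ring. auto. }
      apply (wr_zero_sol k y1 v1 y2 v2 y v S1 S2 HW).
      * apply (wr_small k y v y1 v1 A kap Z B rho); auto.
      * apply (wr_small k y v y2 v2 A kap Z B rho); auto.
    + assert (Hg : 0 < Rabs ga) by (apply Rabs_pos_lt; auto).
      assert (Hsmall : forall e, 0 < e -> exists M, forall z, M <= z -> Z <= z /\ B * exp (- rho * z) < e).
      { intros e He. destruct (exp_small rho (e / (B + 1)) Hr) as [M HM].
        { unfold Rdiv. apply Rmult_lt_0_compat; [auto| apply Rinv_0_lt_compat; lra]. }
        exists (Rmax M Z). intros z Hz. split; [eapply Rle_trans; [apply Rmax_r| exact Hz]|].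
        specialize (HM z ltac:(pose proof (Rmax_l M Z); lra)).
        pose proof (exp_pos (- rho * z)).
        assert ((B + 1) * exp (- rho * z) < (B + 1) * (e / (B + 1))) by (apply Rmult_lt_compat_l; lra).
        replace ((B + 1) * (e / (B + 1))) with e in H0 by (field; lra). nra. }
      destruct (Hsmall (Rabs ga / 2) ltac:(lra)) as [M1 HM1].
      assert (Hyl : forall z, M1 <= z -> Rabs ga / 2 <= Rabs (y z) /\ Rabs (v z) <= B * exp (- rho * z)).
      { intros z Hz. destruct (HM1 z Hz) as [HzZ Hs]. destruct (Hb z HzZ) as [H1 H2].
        rewrite Rminus_0_r in H1. replace (y z - 0 * z - ga) with (y z - ga) in H2 by ring.
        split; auto.
        assert (Rabs ga <= Rabs (y z) + Rabs (y z - ga)).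
        { replace ga with (y z - (y z - ga)) at 1 by ring. unfold Rminus at 1.
          eapply Rle_trans; [apply Rabs_triang|]. rewrite Rabs_Ropp. lra. }
        lra. }
      split.
      * exists M1. intros z Hz. destruct (Hyl z ltac:(lra)) as [H1 _]. intros Hy0. rewrite Hy0, Rabs_R0 in H1. lra.
      * intros eps Heps. destruct (Hsmall (eps * (Rabs ga / 2)) ltac:(nra)) as [M2 HM2].
        exists (Rmax M1 M2). intros z Hz.
        destruct (Hyl z ltac:(pose proof (Rmax_l M1 M2); lra)) as [H1 H2].
        destruct (HM2 z ltac:(pose proof (Rmax_r M1 M2); lra)) as [_ H3].
        rewrite Rminus_0_r. unfold Rdiv. rewrite Rabs_mult, Rabs_inv.
        assert (Hyp : 0 < Rabs (y z)) by lra.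
        apply (Rmult_lt_reg_r (Rabs (y z))); auto. rewrite Rmult_assoc, Rinv_l by lra. rewrite Rmult_1_r.
        assert (eps * (Rabs ga / 2) <= eps * Rabs (y z)) by (apply Rmult_le_compat_l; lra). lra.
  - assert (Hbp : 0 < Rabs be) by (apply Rabs_pos_lt; auto).
    set (Z1 := Rmax Z 0).
    assert (Hbd : forall z, Z1 <= z -> Rabs (v z) <= Rabs be + B /\ Rabs be * z - Rabs ga - B <= Rabs (y z)).
    { intros z Hz. assert (HzZ : Z <= z) by (pose proof (Rmax_l Z 0); unfold Z1 in Hz; lra).
      assert (Hz0' : 0 <= z) by (pose proof (Rmax_r Z 0); unfold Z1 in Hz; lra).
      destruct (Hb z HzZ) as [H1 H2]. pose proof (exp_le1 rho z ltac:(lra) Hz0') as He.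
      assert (HBe : B * exp (- rho * z) <= B) by (pose proof (exp_pos (- rho * z)); nra).
      split.
      - replace (v z) with ((v z - be) + be) by ring. eapply Rle_trans; [apply Rabs_triang|]. lra.
      - assert (Rabs (be * z) <= Rabs (y z) + Rabs (y z - be * z - ga) + Rabs ga).
        { replace (be * z) with (y z - (y z - be * z - ga) - ga) at 1 by ring.
          unfold Rminus at 1. eapply Rle_trans; [apply Rabs_triang|]. rewrite Rabs_Ropp.
          unfold Rminus. eapply Rle_trans; [apply Rplus_le_compat_r; apply Rabs_triang|]. rewrite Rabs_Ropp. lra. }
        rewrite Rabs_mult, (Rabs_right z) in H by lra. lra. }
    assert (Hbig : forall T, exists M, forall z, z > M -> Z1 <= z /\ T < Rabs (y z)).
    { intros T. exists (Rmax Z1 ((T + Rabs ga + B) / Rabs be)). intros z Hz.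
      pose proof (Rmax_l Z1 ((T + Rabs ga + B) / Rabs be)). pose proof (Rmax_r Z1 ((T + Rabs ga + B) / Rabs be)).
      split; [lra|]. destruct (Hbd z ltac:(lra)) as [_ H2].
      assert (Rabs be * ((T + Rabs ga + B) / Rabs be) < Rabs be * z) by (apply Rmult_lt_compat_l; lra).
      replace (Rabs be * ((T + Rabs ga + B) / Rabs be)) with (T + Rabs ga + B) in H1 by (field; lra). lra. }
    split.
    + destruct (Hbig 0) as [M HM]. exists M. intros z Hz Hy0. destruct (HM z Hz) as [_ H]. rewrite Hy0, Rabs_R0 in H. lra.
    + intros eps Heps. destruct (Hbig ((Rabs be + B) / eps)) as [M HM]. exists M. intros z Hz.
      destruct (HM z Hz) as [HzZ H]. destruct (Hbd z HzZ) as [Hv _].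
      assert (HT : 0 < (Rabs be + B) / eps) by (unfold Rdiv; apply Rmult_lt_0_compat; [lra| apply Rinv_0_lt_compat; lra]).
      rewrite Rminus_0_r. unfold Rdiv. rewrite Rabs_mult, Rabs_inv.
      assert (Hyp : 0 < Rabs (y z)) by lra.
      apply (Rmult_lt_reg_r (Rabs (y z))); auto. rewrite Rmult_assoc, Rinv_l by lra. rewrite Rmult_1_r.
      assert (eps * ((Rabs be + B) / eps) < eps * Rabs (y z)) by (apply Rmult_lt_compat_l; lra).
      replace (eps * ((Rabs be + B) / eps)) with (Rabs be + B) in H0 by (field; lra). lra.
Qed.

Lemma lyap_alg c d e r k x y dd : 0 < c -> 0 < d -> 0 < e -> e * d <= c / 2 -> e * c <= 1 / 2 ->
  0 < r -> r <= c / 2 -> r * (1 + e) <= e / 4 -> 0 < k -> k <= e / 6 -> k * d * 9 <= 4 * c ->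
  Rabs x <= r -> d * dd = - c * y - x * (1 - x) ->
  (2 * d * y * dd + 2 * x * y + e * d * (y ^ 2 + x * dd)) + k * (d * y ^ 2 + x ^ 2 + e * d * x * y) <= 0 /\
  x ^ 2 / 2 <= d * y ^ 2 + x ^ 2 + e * d * x * y.
Proof.
  intros Hc Hd He Hed Hec Hr Hrc Hre Hk Hke Hkd Hx Hdd.
  assert (HX : 0 <= x ^ 2) by apply pow2_ge_0. assert (HY : 0 <= y ^ 2) by apply pow2_ge_0.
  assert (Hexp : 2 * d * y * dd + 2 * x * y + e * d * (y ^ 2 + x * dd) =
     -2 * c * y^2 + 2 * (x^2 * y) + e * d * y^2 - e * c * (x * y) - e * x^2 + e * (x^2 * x)).
  { replace (2 * d * y * dd) with (2 * y * (d * dd)) by ring.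
    replace (e * d * (y ^ 2 + x * dd)) with (e * d * y^2 + e * x * (d * dd)) by ring.
    rewrite Hdd. ring. }
  rewrite Hexp.
  assert (f1 : - (e * c * (x * y)) <= e / 2 * x ^ 2 + e * c * c / 2 * y ^ 2).
  { assert (0 <= e * (x + c * y) ^ 2) by (apply Rmult_le_pos; [lra| apply pow2_ge_0]). nra. }
  assert (Hxr : Rabs x * (x^2 + y^2) <= r * (x ^ 2 + y ^ 2)) by (apply Rmult_le_compat_r; lra).
  assert (f2 : 2 * (x ^ 2 * y) <= r * x ^ 2 + r * y ^ 2).
  { assert (2 * (x * y) <= x^2 + y^2) by (assert (0 <= (x - y)^2) by apply pow2_ge_0; nra).
    assert (- (2 * (x * y)) <= x^2 + y^2) by (assert (0 <= (x + y)^2) by apply pow2_ge_0; nra).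
    destruct (Rle_or_lt 0 x) as [Hx0|Hx0].
    - rewrite Rabs_right in Hxr by lra. nra.
    - rewrite Rabs_left in Hxr by lra. nra. }
  assert (f3 : e * (x ^ 2 * x) <= e * r * x ^ 2).
  { assert (x ^ 2 * x <= x ^ 2 * r) by (apply Rmult_le_compat_l; [auto| pose proof (Rle_abs x); lra]). nra. }
  assert (He2 : e * e * d <= 1 / 4) by nra.
  assert (f4a : e * d * (x * y) <= x ^ 2 / 2 + d * y ^ 2 / 8).
  { assert (0 <= (x - e * d * y) ^ 2) by apply pow2_ge_0.
    assert (e * e * d * d * y ^ 2 <= d / 4 * y ^ 2) by (apply Rmult_le_compat_r; [auto| nra]). nra. }
  assert (f4b : - (e * d * (x * y)) <= x ^ 2 / 2 + d * y ^ 2 / 8).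
  { assert (0 <= (x + e * d * y) ^ 2) by apply pow2_ge_0.
    assert (e * e * d * d * y ^ 2 <= d / 4 * y ^ 2) by (apply Rmult_le_compat_r; [auto| nra]). nra. }
  assert (f4 : k * (e * d * (x * y)) <= k * (x ^ 2 / 2 + d * y ^ 2 / 8)) by (apply Rmult_le_compat_l; lra).
  assert (h1 : e * d * y ^ 2 <= c / 2 * y ^ 2) by (apply Rmult_le_compat_r; lra).
  assert (h2 : e * c * c / 2 * y ^ 2 <= c / 4 * y ^ 2).
  { replace (e * c * c / 2) with ((e * c) * (c / 2)) by field. apply Rmult_le_compat_r; [auto| nra]. }
  assert (h3 : k * d * 9 * y ^ 2 <= 4 * c * y ^ 2) by (apply Rmult_le_compat_r; lra).
  assert (h4 : r * y ^ 2 <= c / 2 * y ^ 2) by (apply Rmult_le_compat_r; lra).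
  assert (h5 : r * (1 + e) * x ^ 2 <= e / 4 * x ^ 2) by (apply Rmult_le_compat_r; lra).
  assert (h6 : k * x ^ 2 <= e / 6 * x ^ 2) by (apply Rmult_le_compat_r; lra).
  split.
  - replace (k * (d * y ^ 2 + x ^ 2 + e * d * x * y)) with (k * d * y^2 + k * x^2 + k * (e * d * (x * y))) by ring.
    nra.
  - replace (e * d * x * y) with (e * d * (x * y)) by ring. nra.
Qed.

Lemma u_decay (delta c : R) (u du ddu : R -> R) : 0 < delta -> 0 < c ->
  (forall z, derivable_pt_lim u z (du z)) -> (forall z, derivable_pt_lim du z (ddu z)) ->
  (forall z, delta * ddu z + c * du z + u z * (1 - u z) = 0) ->
  (forall eps, eps > 0 -> exists M, forall z, z > M -> Rabs (u z - 0) < eps) ->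
  exists A kap Z, 0 < kap /\ 0 <= A /\ 0 <= Z /\ forall z, Z <= z -> Rabs (u z) <= A * exp (- kap * z).
Proof.
  intros Hd Hc Du Ddu Hode Hlim.
  set (e := Rmin (c / (2 * delta)) (1 / (2 * c))).
  assert (He : 0 < e) by (unfold e; apply Rmin_glb_lt; unfold Rdiv; apply Rmult_lt_0_compat; try lra; apply Rinv_0_lt_compat; lra).
  assert (Hed : e * delta <= c / 2).
  { assert (e <= c / (2 * delta)) by apply Rmin_l.
    assert (e * delta <= c / (2 * delta) * delta) by (apply Rmult_le_compat_r; lra).
    replace (c / (2 * delta) * delta) with (c / 2) in H0 by (field; lra). exact H0. }
  assert (Hec : e * c <= 1 / 2).
  { assert (e <= 1 / (2 * c)) by apply Rmin_r.
    assert (e * c <= 1 / (2 * c) * c) by (apply Rmult_le_compat_r; lra).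
    replace (1 / (2 * c) * c) with (1 / 2) in H0 by (field; lra). exact H0. }
  set (r := Rmin (c / 2) (e / (4 + 4 * e))).
  assert (Hr : 0 < r) by (unfold r; apply Rmin_glb_lt; [lra| unfold Rdiv; apply Rmult_lt_0_compat; [lra| apply Rinv_0_lt_compat; lra]]).
  assert (Hrc : r <= c / 2) by apply Rmin_l.
  assert (Hre : r * (1 + e) <= e / 4).
  { assert (r <= e / (4 + 4 * e)) by apply Rmin_r.
    assert (r * (1 + e) <= e / (4 + 4 * e) * (1 + e)) by (apply Rmult_le_compat_r; lra).
    replace (e / (4 + 4 * e) * (1 + e)) with (e / 4) in H0 by (field; lra). exact H0. }
  set (k := Rmin (e / 6) (4 * c / (9 * delta))).
  assert (Hk : 0 < k) by (unfold k; apply Rmin_glb_lt; unfold Rdiv; apply Rmult_lt_0_compat; try lra; apply Rinv_0_lt_compat; lra).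
  assert (Hke : k <= e / 6) by apply Rmin_l.
  assert (Hkd : k * delta * 9 <= 4 * c).
  { assert (k <= 4 * c / (9 * delta)) by apply Rmin_r.
    assert (k * (delta * 9) <= 4 * c / (9 * delta) * (delta * 9)) by (apply Rmult_le_compat_r; lra).
    replace (4 * c / (9 * delta) * (delta * 9)) with (4 * c) in H0 by (field; lra). lra. }
  destruct (Hlim r Hr) as [M HM].
  set (V := fun t => delta * du t ^ 2 + u t ^ 2 + e * delta * u t * du t).
  set (V' := fun t => 2 * delta * du t * ddu t + 2 * u t * du t + e * delta * (du t ^ 2 + u t * ddu t)).
  assert (HV : forall t, derivable_pt_lim V t (V' t)).
  { intros t. unfold V, V'.
    assert (Hsq : forall (f : R -> R) f' , derivable_pt_lim f t f' -> derivable_pt_lim (fun t => f t ^ 2) t (2 * f t * f')).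
    { intros f f' Hf. apply (dlim_ext _ _ ((INR 2 * f t ^ Init.Nat.pred 2) * f')); [|simpl; ring].
      apply (derivable_pt_lim_comp f (fun x => x ^ 2)); auto. apply derivable_pt_lim_pow. }
    apply (dlim_ext _ _ (delta * (2 * du t * ddu t) + 2 * u t * du t + (e * delta) * (du t * du t + u t * ddu t))); [|ring].
    apply derivable_pt_lim_plus; [apply derivable_pt_lim_plus|].
    - apply derivable_pt_lim_scal. apply Hsq; auto.
    - apply Hsq; auto.
    - apply (dlim_fext (fun t => (e * delta) * (u t * du t))); [intros; ring|].
      apply derivable_pt_lim_scal. apply derivable_pt_lim_mult; auto. }
  set (Z := Rmax (M + 1) 0).
  assert (HZM : M < Z) by (unfold Z; pose proof (Rmax_l (M + 1) 0); lra).
  assert (HZ0 : 0 <= Z) by (unfold Z; apply Rmax_r).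
  assert (Hpt : forall t, Z <= t -> V' t + k * V t <= 0 /\ u t ^ 2 / 2 <= V t).
  { intros t Ht. specialize (HM t ltac:(lra)). rewrite Rminus_0_r in HM.
    assert (Hdd : delta * ddu t = - c * du t - u t * (1 - u t)) by (pose proof (Hode t); lra).
    destruct (lyap_alg c delta e r k (u t) (du t) (ddu t) Hc Hd He Hed Hec Hr Hrc Hre Hk Hke Hkd ltac:(lra) Hdd) as [H1 H2].
    unfold V, V'. split; [exact H1| exact H2]. }
  set (F := fun t => V t * exp (k * t)).
  assert (HF : forall z, Z <= z -> F z <= F Z).
  { intros z Hz. apply (mono_ge F (fun t => (V' t + k * V t) * exp (k * t))); auto.
    - intros t. apply d_mexp. apply HV.
    - intros t Ht. destruct (Hpt t ltac:(lra)) as [H1 _]. pose proof (exp_pos (k * t)). nra. }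
  set (D := 2 * F Z).
  assert (HD : 0 <= D).
  { unfold D, F. destruct (Hpt Z (Rle_refl _)) as [_ H2]. pose proof (pow2_ge_0 (u Z)). pose proof (exp_pos (k * Z)). nra. }
  exists ((D + 1) / 2), (k / 2), Z. split; [lra|]. split; [lra|]. split; [auto|].
  intros z Hz. specialize (HF z Hz). destruct (Hpt z Hz) as [_ H2].
  set (w := exp (k / 2 * z)).
  assert (Hw : 0 < w) by apply exp_pos.
  assert (Hw2 : w * w = exp (k * z)) by (unfold w; rewrite <- exp_plus; f_equal; field).
  assert (Hx2 : u z ^ 2 * (w * w) <= D).
  { rewrite Hw2. unfold D. change (F z) with (V z * exp (k * z)) in HF. pose proof (exp_pos (k * z)).
    assert (u z ^ 2 / 2 * exp (k * z) <= V z * exp (k * z)) by (apply Rmult_le_compat_r; lra). lra. }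
  assert (Hab : 2 * Rabs (u z) * w <= u z ^ 2 * (w * w) + 1).
  { assert (0 <= (Rabs (u z) * w - 1) ^ 2) by apply pow2_ge_0.
    assert (Rabs (u z) ^ 2 = u z ^ 2) by (rewrite pow2_abs; reflexivity). nra. }
  assert (Hinv : exp (- (k / 2) * z) = / w) by (unfold w; rewrite <- exp_Ropp; f_equal; ring).
  rewrite Hinv. apply (Rmult_le_reg_r w); auto. rewrite Rmult_assoc, Rinv_l by lra. nra.
Qed.

Lemma exp_shift (y1 y0 r z z1 : R) : y1 * exp (- r * z) <= y0 * exp (- r * z1) -> y1 <= y0 * exp (r * (z - z1)).
Proof.
  intros H. pose proof (exp_pos (r * z)).
  assert (y1 * exp (- r * z) * exp (r * z) <= y0 * exp (- r * z1) * exp (r * z)) by (apply Rmult_le_compat_r; lra).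
  rewrite Rmult_assoc, <- exp_plus in H1. rewrite Rmult_assoc, <- exp_plus in H1.
  replace (- r * z + r * z) with 0 in H1 by ring. rewrite exp_0, Rmult_1_r in H1.
  replace (- r * z1 + r * z) with (r * (z - z1)) in H1 by ring. exact H1.
Qed.

Lemma exp_shift' (y1 y0 r z z1 : R) : y0 * exp (- r * z1) <= y1 * exp (- r * z) -> y0 * exp (r * (z - z1)) <= y1.
Proof.
  intros H. pose proof (exp_pos (r * z)).
  assert (y0 * exp (- r * z1) * exp (r * z) <= y1 * exp (- r * z) * exp (r * z)) by (apply Rmult_le_compat_r; lra).
  rewrite Rmult_assoc, <- exp_plus in H1. rewrite Rmult_assoc, <- exp_plus in H1.
  replace (- r * z + r * z) with 0 in H1 by ring. rewrite exp_0, Rmult_1_r in H1.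
  replace (- r * z1 + r * z) with (r * (z - z1)) in H1 by ring. exact H1.
Qed.

Lemma d_subs (f g : R -> R) l1 l2 a x : derivable_pt_lim f x l1 -> derivable_pt_lim g x l2 ->
  derivable_pt_lim (fun t => f t - a * g t) x (l1 - a * l2).
Proof.
  intros H1 H2. apply (dlim_fext (fun t => 1 * f t + (- a) * g t)); [intros; ring|].
  apply (dlim_ext _ _ (1 * l1 + (- a) * l2)); [apply d_lin; auto| ring].
Qed.

Lemma band k y v s kap Z0 z1 : sol k y v -> 0 < s -> 0 < kap -> kap <= s ->
  (forall t, t <= Z0 -> Rabs (k t - s ^ 2) <= s * kap) -> z1 <= Z0 ->
  0 < y z1 -> Rabs (v z1 - s * y z1) <= kap * y z1 ->
  forall z, z1 <= z <= Z0 -> 0 < y z /\ Rabs (v z - s * y z) <= kap * y z /\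
     y z1 * exp ((s - kap) * (z - z1)) <= y z /\ y z <= y z1 * exp ((s + kap) * (z - z1)).
Proof.
  intros [Sy Sv] Hs Hk Hks Hkb Hz1 Hy1 Hv1.
  assert (Hkl : forall t, t <= Z0 -> (s - kap) ^ 2 <= k t /\ k t <= (s + kap) ^ 2).
  { intros t Ht. specialize (Hkb t Ht). pose proof (Rle_abs (k t - s^2)). pose proof (Rle_abs (-(k t - s^2))).
    rewrite Rabs_Ropp in *. split; nra. }
  assert (Hinner : forall z, z1 <= z <= Z0 -> (forall t, z1 <= t < z -> 0 < y t) ->
            0 <= v z - (s - kap) * y z /\ v z - (s + kap) * y z <= 0).
  { intros z Hz Hpos. pose proof (Rle_abs (v z1 - s * y z1)). pose proof (Rle_abs (-(v z1 - s * y z1))).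
    rewrite Rabs_Ropp in *. split.
    - assert (Hm : (v z1 - (s - kap) * y z1) * exp ((s - kap) * z1) <= (v z - (s - kap) * y z) * exp ((s - kap) * z)).
      { apply (mono_le (fun t => (v t - (s - kap) * y t) * exp ((s - kap) * t))
          (fun t => ((k t * y t - (s - kap) * v t) + (s - kap) * (v t - (s - kap) * y t)) * exp ((s - kap) * t))); [| lra|].
        - intros t. apply (d_mexp (fun t => v t - (s - kap) * y t)). apply d_subs; [apply Sv| apply Sy].
        - intros t Ht. pose proof (exp_pos ((s - kap) * t)). destruct (Hkl t ltac:(lra)).
          specialize (Hpos t ltac:(lra)). apply Rmult_le_pos; [nra| lra]. }
      pose proof (exp_pos ((s - kap) * z1)). pose proof (exp_pos ((s - kap) * z)).
      assert (0 <= (v z1 - (s - kap) * y z1) * exp ((s - kap) * z1)) by (apply Rmult_le_pos; nra).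
      nra.
    - assert (Hm : (v z - (s + kap) * y z) * exp ((s + kap) * z) <= (v z1 - (s + kap) * y z1) * exp ((s + kap) * z1)).
      { apply (mono_ge (fun t => (v t - (s + kap) * y t) * exp ((s + kap) * t))
          (fun t => ((k t * y t - (s + kap) * v t) + (s + kap) * (v t - (s + kap) * y t)) * exp ((s + kap) * t))); [| lra|].
        - intros t. apply (d_mexp (fun t => v t - (s + kap) * y t)). apply d_subs; [apply Sv| apply Sy].
        - intros t Ht. pose proof (exp_pos ((s + kap) * t)). destruct (Hkl t ltac:(lra)).
          specialize (Hpos t ltac:(lra)).
          replace ((k t * y t - (s + kap) * v t + (s + kap) * (v t - (s + kap) * y t)) * exp ((s + kap) * t))
            with (- (((s + kap) ^ 2 - k t) * y t * exp ((s + kap) * t))) by ring.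
          assert (0 <= ((s + kap) ^ 2 - k t) * y t * exp ((s + kap) * t)) by (apply Rmult_le_pos; [apply Rmult_le_pos|]; lra).
          lra. }
      pose proof (exp_pos ((s + kap) * z1)). pose proof (exp_pos ((s + kap) * z)).
      assert ((v z1 - (s + kap) * y z1) * exp ((s + kap) * z1) <= 0) by (assert (v z1 - (s + kap) * y z1 <= 0) by nra; nra).
      nra. }
  assert (Hlow : forall z, z1 <= z <= Z0 -> (forall t, z1 <= t < z -> 0 < y t) ->
            y z1 * exp (- (s - kap) * z1) <= y z * exp (- (s - kap) * z)).
  { intros z Hz Hpos.
    apply (mono_le (fun t => y t * exp (- (s - kap) * t)) (fun t => (v t + - (s - kap) * y t) * exp (- (s - kap) * t))); [| lra|].
    - intros t. apply (d_mexp y). apply Sy.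
    - intros t Ht. pose proof (exp_pos (- (s - kap) * t)).
      destruct (Hinner t ltac:(lra)) as [H1 _]. { intros t' Ht'. apply Hpos. lra. }
      apply Rmult_le_pos; lra. }
  assert (Hpos : forall z, z1 <= z <= Z0 -> 0 < y z).
  { apply (cont_induction y z1 Z0 Hz1).
    - intros t. eapply cont_of_dlim. apply Sy.
    - intros z Hz Hpos. specialize (Hlow z Hz Hpos).
      pose proof (exp_pos (- (s - kap) * z1)). pose proof (exp_pos (- (s - kap) * z)).
      assert (0 < y z1 * exp (- (s - kap) * z1)) by (apply Rmult_lt_0_compat; auto). nra. }
  intros z Hz.
  assert (Hp' : forall t, z1 <= t < z -> 0 < y t) by (intros t Ht; apply Hpos; lra).
  split; [apply Hpos; auto|]. destruct (Hinner z Hz Hp') as [H1 H2].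
  split; [apply Rabs_le; lra|]. split.
  - apply exp_shift'. apply Hlow; auto.
  - apply exp_shift.
    apply (mono_ge (fun t => y t * exp (- (s + kap) * t)) (fun t => (v t + - (s + kap) * y t) * exp (- (s + kap) * t))); [| lra|].
    + intros t. apply (d_mexp y). apply Sy.
    + intros t Ht. pose proof (exp_pos (- (s + kap) * t)).
      destruct (Hinner t ltac:(lra)) as [_ H3]. { intros t' Ht'. apply Hpos. lra. }
      nra.
Qed.

Lemma minf_exists k y1 v1 y2 v2 s : sol k y1 v1 -> sol k y2 v2 -> (forall x, y1 x * v2 x - v1 x * y2 x = 1) ->
  0 < s -> (forall eps, eps > 0 -> exists M, forall t, t < M -> Rabs (k t - s ^ 2) < eps) ->
  exists y v, sol k y v /\ (exists M, forall z, z < M -> y z <> 0) /\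
    (forall eps, eps > 0 -> exists M, forall z, z < M -> Rabs (v z / y z - s) < eps).
Proof.
  intros S1 S2 HW Hs Hk.
  assert (HZk : forall kap, 0 < kap -> exists Z0, forall t, t <= Z0 -> Rabs (k t - s ^ 2) <= s * kap).
  { intros kap Hkap. destruct (Hk (s * kap) ltac:(nra)) as [M HM]. exists (M - 1). intros t Ht.
    left. apply HM. lra. }
  set (k0 := s / 2). assert (Hk0 : 0 < k0) by (unfold k0; lra). assert (Hk0s : k0 <= s) by (unfold k0; lra).
  destruct (HZk k0 Hk0) as [Zs HZs].
  set (cA := fun N : nat => v2 (- INR N) - s * y2 (- INR N)).
  set (cB := fun N : nat => s * y1 (- INR N) - v1 (- INR N)).
  set (Y := fun N x => cA N * y1 x + cB N * y2 x).
  set (Vv := fun N x => cA N * v1 x + cB N * v2 x).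
  assert (SY : forall N, sol k (Y N) (Vv N)) by (intros N; apply sol_lin; auto).
  assert (HY0 : forall N, Y N (- INR N) = 1 /\ Vv N (- INR N) = s).
  { intros N. unfold Y, Vv, cA, cB. specialize (HW (- INR N)). split.
    - transitivity (y1 (- INR N) * v2 (- INR N) - v1 (- INR N) * y2 (- INR N)); [ring| auto].
    - transitivity (s * (y1 (- INR N) * v2 (- INR N) - v1 (- INR N) * y2 (- INR N))); [ring| rewrite HW; ring]. }
  assert (HbN : forall kap Z0, 0 < kap -> kap <= s -> (forall t, t <= Z0 -> Rabs (k t - s ^ 2) <= s * kap) ->
     forall N z, - INR N <= z <= Z0 -> 0 < Y N z /\ Rabs (Vv N z - s * Y N z) <= kap * Y N z /\
        exp ((s - kap) * (z + INR N)) <= Y N z).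
  { intros kap Z0 Hkap Hkaps HZ0 N z Hz. destruct (HY0 N) as [E1 E2].
    destruct (band k (Y N) (Vv N) s kap Z0 (- INR N) (SY N) Hs Hkap Hkaps HZ0 ltac:(lra)) with (z := z) as [B1 [B2 [B3 B4]]];
      [rewrite E1; lra| rewrite E1, E2; replace (s - s * 1) with 0 by ring; rewrite Rabs_R0; lra| lra|].
    rewrite E1 in B3. replace (z - - INR N) with (z + INR N) in B3 by ring. split; [auto| split; [auto| lra]]. }
  destruct (nat_ge (- Zs)) as [N0 HN0].
  set (sig := fun N => Vv N Zs / Y N Zs).
  assert (Hcau : forall N M, (N0 <= N)%nat -> (N <= M)%nat -> Rabs (sig M - sig N) <= k0 * exp (- (2 * (s - k0)) * (Zs + INR N))).
  { intros N M HN HM. apply le_INR in HN. apply le_INR in HM.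
    destruct (HbN k0 Zs Hk0 Hk0s HZs N Zs ltac:(lra)) as [P1 [_ P3]].
    destruct (HbN k0 Zs Hk0 Hk0s HZs M (- INR N) ltac:(lra)) as [Q1 [Q2 _]].
    destruct (band k (Y M) (Vv M) s k0 Zs (- INR N) (SY M) Hs Hk0 Hk0s HZs ltac:(lra) Q1 Q2 Zs ltac:(lra)) as [R1 [_ [R3 _]]].
    set (D := Vv N Zs * Y M Zs - Vv M Zs * Y N Zs).
    assert (HD : D = Vv N (- INR N) * Y M (- INR N) - Vv M (- INR N) * Y N (- INR N)).
    { unfold D. pose proof (wr_const k (Y M) (Vv M) (Y N) (Vv N) (SY M) (SY N) Zs (- INR N)). lra. }
    destruct (HY0 N) as [E1 E2]. rewrite E1, E2 in HD.
    assert (HDb : Rabs D <= k0 * Y M (- INR N)).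
    { rewrite HD. replace (s * Y M (- INR N) - Vv M (- INR N) * 1) with (- (Vv M (- INR N) - s * Y M (- INR N))) by ring.
      rewrite Rabs_Ropp. auto. }
    assert (Hsig : sig M - sig N = - D / (Y N Zs * Y M Zs)) by (unfold sig, D; field; lra).
    rewrite Hsig. unfold Rdiv. rewrite Rabs_mult, Rabs_Ropp, Rabs_inv, Rabs_mult, (Rabs_right (Y N Zs)), (Rabs_right (Y M Zs)) by lra.
    set (E := exp ((s - k0) * (Zs + INR N))). fold E in P3.
    replace (Zs - - INR N) with (Zs + INR N) in R3 by ring. fold E in R3.
    assert (HE : 0 < E) by apply exp_pos.
    assert (HEE : exp (- (2 * (s - k0)) * (Zs + INR N)) * (E * E) = 1).
    { unfold E. rewrite <- !exp_plus. rewrite <- exp_0. f_equal. ring. }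
    assert (HYM : 0 < Y M (- INR N)) by lra.
    apply (Rmult_le_reg_r (Y N Zs * Y M Zs)); [apply Rmult_lt_0_compat; lra|].
    rewrite Rmult_assoc, Rinv_l by (apply Rgt_not_eq, Rmult_lt_0_compat; lra). rewrite Rmult_1_r.
    assert (E * (Y M (- INR N) * E) <= Y N Zs * Y M Zs) by (apply Rmult_le_compat; nra).
    assert (Hk0e : 0 <= k0 * exp (- (2 * (s - k0)) * (Zs + INR N))) by (pose proof (exp_pos (- (2 * (s - k0)) * (Zs + INR N))); nra).
    assert (k0 * exp (- (2 * (s - k0)) * (Zs + INR N)) * (E * (Y M (- INR N) * E)) <= k0 * exp (- (2 * (s - k0)) * (Zs + INR N)) * (Y N Zs * Y M Zs)) by (apply Rmult_le_compat_l; auto).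
    replace (k0 * exp (- (2 * (s - k0)) * (Zs + INR N)) * (E * (Y M (- INR N) * E))) with (k0 * Y M (- INR N) * (exp (- (2 * (s - k0)) * (Zs + INR N)) * (E * E))) in H0 by ring.
    rewrite HEE in H0. lra. }
  set (tau := fun n => k0 * exp (- (2 * (s - k0)) * (Zs + INR (N0 + n)))).
  assert (Hsk : 0 < s - k0) by (unfold k0; lra).
  assert (Htau : Un_cv tau 0).
  { intros e He. destruct (exp_small (2 * (s - k0)) (e / k0)) as [Z1 HZ1]; [lra| unfold Rdiv; apply Rmult_lt_0_compat; [lra| apply Rinv_0_lt_compat; lra]|].
    destruct (nat_ge (Z1 - Zs)) as [n0 Hn0]. exists n0. intros n Hn. unfold Rdist, tau. rewrite Rminus_0_r.
    apply le_INR in Hn. rewrite plus_INR in *. pose proof (pos_INR N0).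
    specialize (HZ1 (Zs + (INR N0 + INR n)) ltac:(lra)). pose proof (exp_pos (- (2 * (s - k0)) * (Zs + (INR N0 + INR n)))).
    rewrite Rabs_right by nra.
    assert (k0 * exp (- (2 * (s - k0)) * (Zs + (INR N0 + INR n))) < k0 * (e / k0)) by (apply Rmult_lt_compat_l; lra).
    replace (k0 * (e / k0)) with e in H1 by (field; lra). exact H1. }
  destruct (cv_of_tail (fun n => sig (N0 + n)%nat) tau Htau) as [sg [Hsg _]].
  { intros m n Hmn. apply Hcau; lia. }
  destruct (data_sol k y1 v1 y2 v2 S1 S2 HW Zs 1 0) as [p1 [q1 [SP1 [P1a P1b]]]].
  destruct (data_sol k y1 v1 y2 v2 S1 S2 HW Zs 0 1) as [p2 [q2 [SP2 [P2a P2b]]]].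
  assert (Hid : forall N x, (N0 <= N)%nat -> Y N x / Y N Zs = p1 x + sig N * p2 x /\ Vv N x / Y N Zs = q1 x + sig N * q2 x).
  { intros N x HN. apply le_INR in HN.
    assert (HYp : 0 < Y N Zs) by (apply (HbN k0 Zs Hk0 Hk0s HZs N Zs); lra).
    destruct (sol_unique k y1 v1 y2 v2 (fun x => / Y N Zs * Y N x + 0 * y1 x) (fun x => / Y N Zs * Vv N x + 0 * v1 x)
      (fun x => 1 * p1 x + sig N * p2 x) (fun x => 1 * q1 x + sig N * q2 x) S1 S2 HW
      (sol_lin k (Y N) (Vv N) y1 v1 (/ Y N Zs) 0 (SY N) S1) (sol_lin k p1 q1 p2 q2 1 (sig N) SP1 SP2) Zs) with (x := x) as [A B].
    - rewrite P1a, P2a. field. lra.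
    - rewrite P1b, P2b. unfold sig. field. lra.
    - unfold Rdiv. split; [rewrite Rmult_comm; lra| rewrite Rmult_comm; lra]. }
  set (Py := fun x => p1 x + sg * p2 x). set (Pv := fun x => q1 x + sg * q2 x).
  assert (SP : sol k Py Pv).
  { apply (sol_lin k p1 q1 p2 q2 1 sg SP1 SP2) || idtac.
    destruct (sol_lin k p1 q1 p2 q2 1 sg SP1 SP2) as [A B]. split; intros x.
    - apply (dlim_fext (fun x => 1 * p1 x + sg * p2 x)); [intros; unfold Py; ring|].
      apply (dlim_ext _ _ (1 * q1 x + sg * q2 x)); [apply A| unfold Pv; ring].
    - apply (dlim_fext (fun x => 1 * q1 x + sg * q2 x)); [intros; unfold Pv; ring|].
      apply (dlim_ext _ _ (k x * (1 * p1 x + sg * p2 x))); [apply B| unfold Py; ring]. }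
  assert (Hlimz : forall z (f g : R -> R), Un_cv (fun n => f z + sig (N0 + n)%nat * g z) (f z + sg * g z)).
  { intros z f g. apply CV_plus.
    - intros e He. exists O. intros. unfold Rdist. rewrite Rminus_eq_0, Rabs_R0. lra.
    - apply CV_mult; auto. intros e He. exists O. intros. unfold Rdist. rewrite Rminus_eq_0, Rabs_R0. lra. }
  assert (Hclaim : forall kap, 0 < kap -> kap <= k0 -> exists Zk, Zk <= Zs /\ forall z, z <= Zk ->
     exp (- (s + k0) * (Zs - z)) <= Py z /\ Rabs (Pv z - s * Py z) <= kap * Py z).
  { intros kap Hkap Hkk. destruct (HZk kap Hkap) as [Zk0 HZk0].
    exists (Rmin Zk0 Zs). split; [apply Rmin_r|]. intros z Hz.
    assert (Hz1 : z <= Zk0) by (pose proof (Rmin_l Zk0 Zs); lra).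
    assert (Hz2 : z <= Zs) by (pose proof (Rmin_r Zk0 Zs); lra).
    assert (HZk1 : forall t, t <= Rmin Zk0 Zs -> Rabs (k t - s ^ 2) <= s * kap) by (intros t Ht; apply HZk0; pose proof (Rmin_l Zk0 Zs); lra).
    destruct (nat_ge (- z)) as [N1 HN1].
    assert (Hseq : forall n, (N1 <= n)%nat ->
       exp (- (s + k0) * (Zs - z)) <= p1 z + sig (N0 + n)%nat * p2 z /\ (q1 z + sig (N0 + n)%nat * q2 z) - (s + kap) * (p1 z + sig (N0 + n)%nat * p2 z) <= 0 /\ 0 <= (q1 z + sig (N0 + n)%nat * q2 z) - (s - kap) * (p1 z + sig (N0 + n)%nat * p2 z)).
    { intros n Hn. set (N := (N0 + n)%nat).
      assert (HNN : INR N1 <= INR N) by (apply le_INR; unfold N; lia).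
      destruct (Hid N z ltac:(unfold N; lia)) as [I1 I2]. rewrite <- I1, <- I2.
      destruct (HbN kap (Rmin Zk0 Zs) Hkap ltac:(lra) HZk1 N z ltac:(lra)) as [B1 [B2 _]].
      assert (B2' : Rabs (Vv N z - s * Y N z) <= k0 * Y N z) by nra.
      destruct (band k (Y N) (Vv N) s k0 Zs z (SY N) Hs Hk0 Hk0s HZs Hz2 B1 B2' Zs ltac:(lra)) as [C1 [_ [_ C4]]].
      assert (HE : exp (- (s + k0) * (Zs - z)) * exp ((s + k0) * (Zs - z)) = 1) by (rewrite <- exp_plus, <- exp_0; f_equal; ring).
      pose proof (exp_pos (- (s + k0) * (Zs - z))). pose proof (exp_pos ((s + k0) * (Zs - z))).
      pose proof (Rle_abs (Vv N z - s * Y N z)). pose proof (Rle_abs (- (Vv N z - s * Y N z))). rewrite Rabs_Ropp in *.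
      split; [|split].
      - apply (Rmult_le_reg_r (Y N Zs)); auto. unfold Rdiv. rewrite Rmult_assoc, Rinv_l by lra. rewrite Rmult_1_r.
        assert (exp (- (s + k0) * (Zs - z)) * Y N Zs <= exp (- (s + k0) * (Zs - z)) * (Y N z * exp ((s + k0) * (Zs - z)))) by (apply Rmult_le_compat_l; lra).
        replace (exp (- (s + k0) * (Zs - z)) * (Y N z * exp ((s + k0) * (Zs - z)))) with (Y N z * (exp (- (s + k0) * (Zs - z)) * exp ((s + k0) * (Zs - z)))) in H3 by ring.
        rewrite HE in H3. lra.
      - replace (Vv N z / Y N Zs - (s + kap) * (Y N z / Y N Zs)) with ((Vv N z - (s + kap) * Y N z) / Y N Zs) by (field; lra).
        unfold Rdiv. assert (0 < / Y N Zs) by (apply Rinv_0_lt_compat; auto). nra.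
      - replace (Vv N z / Y N Zs - (s - kap) * (Y N z / Y N Zs)) with ((Vv N z - (s - kap) * Y N z) / Y N Zs) by (field; lra).
        unfold Rdiv. assert (0 < / Y N Zs) by (apply Rinv_0_lt_compat; auto). nra. }
    assert (L1 : exp (- (s + k0) * (Zs - z)) <= Py z).
    { apply (lim_ge _ _ _ N1 (Hlimz z p1 p2)). intros n Hn. apply Hseq; auto. }
    assert (L2 : Pv z - (s + kap) * Py z <= 0).
    { apply (lim_le (fun n => (q1 z + sig (N0 + n)%nat * q2 z) - (s + kap) * (p1 z + sig (N0 + n)%nat * p2 z)) _ _ N1).
      - apply CV_minus; [apply Hlimz|]. apply CV_mult; [| apply Hlimz].
        intros e He. exists O. intros. unfold Rdist. rewrite Rminus_eq_0, Rabs_R0. lra.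
      - intros n Hn. apply Hseq; auto. }
    assert (L3 : 0 <= Pv z - (s - kap) * Py z).
    { apply (lim_ge (fun n => (q1 z + sig (N0 + n)%nat * q2 z) - (s - kap) * (p1 z + sig (N0 + n)%nat * p2 z)) _ _ N1).
      - apply CV_minus; [apply Hlimz|]. apply CV_mult; [| apply Hlimz].
        intros e He. exists O. intros. unfold Rdist. rewrite Rminus_eq_0, Rabs_R0. lra.
      - intros n Hn. apply Hseq; auto. }
    split; [auto| apply Rabs_le; lra]. }
  exists Py, Pv. split; [exact SP|]. split.
  - destruct (Hclaim k0 Hk0 (Rle_refl _)) as [Zk [_ HZ]]. exists Zk. intros z Hz.
    destruct (HZ z ltac:(lra)) as [H1 _]. pose proof (exp_pos (- (s + k0) * (Zs - z))). lra.
  - intros eps Heps. set (kap := Rmin (eps / 2) k0).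
    assert (Hkap : 0 < kap) by (unfold kap; apply Rmin_glb_lt; lra).
    destruct (Hclaim kap Hkap (Rmin_r _ _)) as [Zk [_ HZ]]. exists Zk. intros z Hz.
    destruct (HZ z ltac:(lra)) as [H1 H2]. pose proof (exp_pos (- (s + k0) * (Zs - z))).
    assert (HP : 0 < Py z) by lra.
    replace (Pv z / Py z - s) with ((Pv z - s * Py z) / Py z) by (field; lra).
    unfold Rdiv. rewrite Rabs_mult, Rabs_inv, (Rabs_right (Py z)) by lra.
    apply (Rmult_lt_reg_r (Py z)); auto. rewrite Rmult_assoc, Rinv_l by lra. rewrite Rmult_1_r.
    assert (kap <= eps / 2) by apply Rmin_l. nra.
Qed.

Lemma sqr_le_of (c d : R) : 0 < c -> 0 < d -> c <= 2 * sqrt d -> c ^ 2 <= 4 * d.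
Proof.
  intros Hc Hd H. pose proof (sqrt_sqrt d ltac:(lra)). pose proof (sqrt_pos d). nra.
Qed.

Lemma sqr_lt_of (c d : R) : 0 < c -> 0 < d -> c < 2 * sqrt d -> c ^ 2 < 4 * d.
Proof.
  intros Hc Hd H. pose proof (sqrt_sqrt d ltac:(lra)). pose proof (sqrt_pos d). nra.
Qed.

Theorem mainTheorem6 (delta c : R) (u : R -> R)
  (Hdelta : 0 < delta) (Hc0 : 0 < c) (Hc1 : c <= 2 * sqrt delta)
  (Hu : travelling_wave delta c u) :
  let lt := 1 - c ^ 2 / (4 * delta) in
  0 <= lt /\
  mu_s_plus delta c lt = - c / (2 * delta) /\
  mu_u_plus delta c lt = - c / (2 * delta) /\
  (* the unstable Riccati solution exists ... *)
  (exists p q, lin_solution delta c lt u p q /\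
     ratio_tends_minf p q (mu_u_minus delta c lt)) /\
  (* ... and every Riccati solution tending to mu^u_- at -oo tends to the
     double root mu^s_+ = -c/(2 delta) at +oo *)
  (forall p q, lin_solution delta c lt u p q ->
     ratio_tends_minf p q (mu_u_minus delta c lt) ->
     ratio_tends_pinf p q (mu_s_plus delta c lt)) /\
  extended_eigenvalue delta c u lt /\
  (c < 2 * sqrt delta -> 0 < lt).
Proof.
  intros lt. destruct Hu as [du [ddu [Du [Ddu [Hode [Hm Hp]]]]]].
  assert (Hc2 : c ^ 2 <= 4 * delta) by (apply sqr_le_of; auto).
  assert (Hlt0 : 0 <= lt) by (unfold lt; assert (c ^ 2 / (4 * delta) <= 1) by (apply (Rmult_le_reg_r (4 * delta)); [lra| unfold Rdiv; rewrite Rmult_assoc, Rinv_l by lra; lra]); lra).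
  assert (Hzero : c ^ 2 + 4 * delta * (lt - 1) = 0) by (unfold lt; field; lra).
  assert (Hms : mu_s_plus delta c lt = - c / (2 * delta)) by (unfold mu_s_plus; rewrite Hzero, sqrt_0; field; lra).
  assert (Hmu : mu_u_plus delta c lt = - c / (2 * delta)) by (unfold mu_u_plus; rewrite Hzero, sqrt_0; field; lra).
  set (a := c / (2 * delta)).
  set (k := fun z => 2 * u z / delta).
  assert (Hkc : forall t, continuity_pt k t).
  { intros t. unfold k. apply continuity_pt_div; [| apply continuity_pt_const; intros ? ?; reflexivity| lra].
    apply continuity_pt_scal. eapply cont_of_dlim. apply Du. }
  destruct (fund k Hkc) as [y1 [v1 [y2 [v2 [S1 [S2 HW]]]]]].
  set (s := sqrt (8 * delta) / (2 * delta)).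
  assert (Hs : 0 < s) by (unfold s; unfold Rdiv; apply Rmult_lt_0_compat; [apply sqrt_lt_R0; lra| apply Rinv_0_lt_compat; lra]).
  assert (Hs2 : s ^ 2 = 2 / delta).
  { unfold s. unfold Rdiv. rewrite Rpow_mult_distr. rewrite <- (Rsqr_pow2 (sqrt (8 * delta))), Rsqr_sqrt by lra. field. lra. }
  assert (Hmuu : mu_u_minus delta c lt = s - a).
  { unfold mu_u_minus, s, a. replace (c ^ 2 + 4 * delta * (lt + 1)) with (8 * delta) by (unfold lt; field; lra). field. lra. }
  assert (Hkm : forall eps, eps > 0 -> exists M, forall t, t < M -> Rabs (k t - s ^ 2) < eps).
  { intros eps Heps. destruct (Hm (eps * delta / 2)) as [M HM]; [apply Rmult_lt_0_compat; [nra| lra]|].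
    exists M. intros t Ht. specialize (HM t Ht). rewrite Hs2. unfold k.
    replace (2 * u t / delta - 2 / delta) with ((u t - 1) * (2 / delta)) by (field; lra).
    rewrite Rabs_mult, (Rabs_right (2 / delta)) by (left; unfold Rdiv; apply Rmult_lt_0_compat; [lra| apply Rinv_0_lt_compat; lra]).
    apply (Rmult_lt_reg_r (delta / 2)); [lra|].
    replace (Rabs (u t - 1) * (2 / delta) * (delta / 2)) with (Rabs (u t - 1)) by (field; lra). lra. }
  assert (Hlin_of : forall y v, sol k y v -> lin_solution delta c lt u (fun z => exp (- a * z) * y z)
                       (fun z => exp (- a * z) * (v z - a * y z)) \/ True).
  { intros; right; exact I. }
  assert (Hconv : forall y v, sol k y v ->
     (forall z, derivable_pt_lim (fun z => exp (- a * z) * y z) z (exp (- a * z) * (v z - a * y z))) /\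
     (forall z, derivable_pt_lim (fun z => exp (- a * z) * (v z - a * y z)) z
         ((lt - 1 + 2 * u z) / delta * (exp (- a * z) * y z) - c / delta * (exp (- a * z) * (v z - a * y z))))).
  { intros y v [Sy Sv]. split; intros z.
    - apply (dlim_fext (fun z => y z * exp (- a * z))); [intros; ring|].
      apply (dlim_ext _ _ ((v z + - a * y z) * exp (- a * z))); [apply (d_mexp y); apply Sy| ring].
    - apply (dlim_fext (fun z => (v z - a * y z) * exp (- a * z))); [intros; ring|].
      apply (dlim_ext _ _ (((k z * y z - a * v z) + - a * (v z - a * y z)) * exp (- a * z))).
      + apply (d_mexp (fun z => v z - a * y z)). apply (dlim_fext (fun t => 1 * v t + (- a) * y t)); [intros; ring|].
        apply (dlim_ext _ _ (1 * (k z * y z) + (- a) * v z)); [apply d_lin; auto| ring].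
      + unfold k, lt, a. field. lra. }
  destruct (minf_exists k y1 v1 y2 v2 s S1 S2 HW Hs Hkm) as [Py [Pv [SP [[M0 HM0] Hrat]]]].
  set (p0 := fun z => exp (- a * z) * Py z). set (q0 := fun z => exp (- a * z) * (Pv z - a * Py z)).
  assert (Hlin0 : lin_solution delta c lt u p0 q0).
  { destruct (Hconv Py Pv SP) as [C1 C2]. split; [exact C1|]. split; [exact C2|].
    exists (M0 - 1). unfold p0. intros [H0 _]. pose proof (exp_pos (- a * (M0 - 1))).
    apply (HM0 (M0 - 1)); [lra|]. apply (Rmult_eq_reg_l (exp (- a * (M0 - 1)))); [rewrite H0; ring| lra]. }
  assert (Hminf0 : ratio_tends_minf p0 q0 (mu_u_minus delta c lt)).
  { split.
    - exists M0. intros z Hz. unfold p0. pose proof (exp_pos (- a * z)). specialize (HM0 z Hz).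
      intros Hx. apply Rmult_integral in Hx. destruct Hx; lra.
    - intros eps Heps. destruct (Hrat eps Heps) as [M HM]. exists (Rmin M M0). intros z Hz.
      assert (z < M) by (pose proof (Rmin_l M M0); lra). assert (z < M0) by (pose proof (Rmin_r M M0); lra).
      specialize (HM z H). specialize (HM0 z H0). pose proof (exp_pos (- a * z)).
      rewrite Hmuu. unfold p0, q0.
      replace (exp (- a * z) * (Pv z - a * Py z) / (exp (- a * z) * Py z) - (s - a)) with (Pv z / Py z - s) by (field; lra).
      exact HM. }
  destruct (u_decay delta c u du ddu Hdelta Hc0 Du Ddu Hode Hp) as [A [kap [Z [Hkap [HA [HZ Hdec]]]]]].
  assert (Hkdec : forall z, Z <= z -> Rabs (k z) <= (2 * A / delta) * exp (- kap * z)).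
  { intros z Hz. specialize (Hdec z Hz). unfold k.
    replace (2 * u z / delta) with ((2 / delta) * u z) by (field; lra).
    rewrite Rabs_mult, (Rabs_right (2 / delta)) by (left; unfold Rdiv; apply Rmult_lt_0_compat; [lra| apply Rinv_0_lt_compat; lra]).
    replace (2 * A / delta * exp (- kap * z)) with ((2 / delta) * (A * exp (- kap * z))) by (field; lra).
    apply Rmult_le_compat_l; [left; unfold Rdiv; apply Rmult_lt_0_compat; [lra| apply Rinv_0_lt_compat; lra]| auto]. }
  assert (HA2 : 0 <= 2 * A / delta) by (unfold Rdiv; apply Rmult_le_pos; [lra| left; apply Rinv_0_lt_compat; lra]).
  assert (Hevery : forall p q, lin_solution delta c lt u p q -> ratio_tends_pinf p q (mu_s_plus delta c lt)).
  { intros p q [Dp [Dq [z0 Hz0]]].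
    set (y := fun z => p z * exp (a * z)). set (v := fun z => (q z + a * p z) * exp (a * z)).
    assert (Sv : sol k y v).
    { split; intros z.
      - apply (d_mexp p). apply Dp.
      - apply (dlim_ext _ _ (((((lt - 1 + 2 * u z) / delta * p z - c / delta * q z) + a * q z) + a * (q z + a * p z)) * exp (a * z))).
        + apply (d_mexp (fun z => q z + a * p z)).
          apply (dlim_fext (fun t => 1 * q t + a * p t)); [intros; ring|].
          apply (dlim_ext _ _ (1 * ((lt - 1 + 2 * u z) / delta * p z - c / delta * q z) + a * q z)); [apply d_lin; auto| ring].
        + unfold k, y, lt, a. field. lra. }
    assert (Hnt : exists z1, ~ (y z1 = 0 /\ v z1 = 0)).
    { exists z0. intros [H1 H2]. apply Hz0. unfold y, v in *. pose proof (exp_pos (a * z0)).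
      assert (p z0 = 0) by (apply Rmult_integral in H1; destruct H1; lra). split; auto.
      apply Rmult_integral in H2. destruct H2 as [H2|H2]; [|lra]. rewrite H0 in H2. lra. }
    destruct (ratio_pinf k y1 v1 y2 v2 y v (2 * A / delta) kap Z Hkap HA2 HZ Hkdec S1 S2 HW Sv Hnt) as [[M HM] Hr].
    split.
    - exists M. intros z Hz Hp0. apply (HM z Hz). unfold y. rewrite Hp0. ring.
    - intros eps Heps. destruct (Hr eps Heps) as [M' HM']. exists (Rmax M M'). intros z Hz.
      assert (z > M) by (pose proof (Rmax_l M M'); lra). assert (z > M') by (pose proof (Rmax_r M M'); lra).
      specialize (HM z H). specialize (HM' z H0). pose proof (exp_pos (a * z)).
      assert (Hpz : p z <> 0) by (intros E; apply HM; unfold y; rewrite E; ring).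
      rewrite Hms. unfold y, v in HM'.
      assert (Hex : exp (a * z) <> 0) by lra.
      replace ((q z + a * p z) * exp (a * z) / (p z * exp (a * z)) - 0) with (q z / p z - - c / (2 * delta)) in HM'.
      2:{ replace (- c / (2 * delta)) with (- a) by (unfold a; field; lra). field. split; auto. }
      exact HM'. }
  split; [exact Hlt0|]. split; [exact Hms|]. split; [exact Hmu|].
  split; [exists p0, q0; split; auto|].
  split; [intros p q H _; apply Hevery; auto|].
  split.
  - exists p0, q0. split; [auto| split; [auto| apply Hevery; auto]].
  - intros Hlt. assert (c ^ 2 < 4 * delta) by (apply sqr_lt_of; auto).
    unfold lt. assert (c ^ 2 / (4 * delta) < 1) by (apply (Rmult_lt_reg_r (4 * delta)); [lra| unfold Rdiv; rewrite Rmult_assoc, Rinv_l by lra; lra]). lra.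
Qed.
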